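(* Let $X$ be a complex Banach space and let $\mathcal{D}=\{X_n:n\ge1\}$ be a Schauder decomposition of $X$ which is not $R$-Schauder. Then: (a) there exists a sectorial operator $A$ on $X$ which is a $\mathcal{D}$-multiplier such that the set $\{e^{-tA^{-1}}:t\ge0\}$ is not $R$-bounded; (b) there exists a Ritt operator $T\in B(X)$ which is a $\mathcal{D}$-multiplier such that the set $\{T^n:n\ge0\}$ is not $R$-bounded.
   Context: $R$-boundedness: with $(\varepsilon_j)$ independent Rademacher variables on $(\Omega,\mathbb{P})$ and $\|\sum_{j=1}^k\varepsilon_j\otimes x_j\|_{R,X}=\int_\Omega\|\sum_j\varepsilon_j(u)x_j\|\,d\mathbb{P}(u)$, a set $F\subset B(X)$ is $R$-bounded if there is $K$ with $\|\sum_j\varepsilon_j\otimes T_j x_j\|_{R,X}\le K\|\sum_j\varepsilon_j\otimes x_j\|_{R,X}$ for all finite families $T_j\in F$, $x_j\in X$. A Schauder decomposition of $X$ is a sequence $\mathcal{D}=\{X_n:n\ge1\}$ of closed subspaces such that every $x\in X$ has a unique expansion $x=\sum_{n\ge1}x_n$ with $x_n\in X_n$; $p_n(x)=x_n$ and $P_N=\sum_{n=1}^Np_n$. $\mathcal{D}$ is $R$-Schauder if $\{P_N:N\ge1\}$ is $R$-bounded. A sectorial $\mathcal{D}$-multiplier is an operator $A$ of the form: for a nondecreasing sequence $(a_n)_{n\ge1}$ in $(0,\infty)$, $D(A)=\{x:\sum_na_np_n(x)\text{ converges}\}$, $Ax=\sum_na_np_n(x)$; such $A$ is sectorial of type $0$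 and invertible, with $A^{-1}\in B(X)$ given by $A^{-1}x=\sum_n a_n^{-1}p_n(x)$, and $(e^{-tA^{-1}})_{t\ge0}$ is the semigroup generated by $-A^{-1}$. A Ritt $\mathcal{D}$-multiplier is an operator $T(x)=\sum_{n\ge1}c_np_n(x)$ with $(c_n)$ a nondecreasing sequence in $(0,1)$; such $T$ is a Ritt operator, i.e. $\{T^n:n\ge0\}$ and $\{nT^n(I_X-T):n\ge1\}$ are bounded. *)

(* Defs.v *)
From Stdlib Require Import Reals Factorial List.
Open Scope R_scope.

Record Cplx := mkC { Cre : R; Cim : R }.
Definition Cadd (a b : Cplx) : Cplx := mkC (Cre a + Cre b) (Cim a + Cim b).
Definition Cmul (a b : Cplx) : Cplx :=
  mkC (Cre a * Cre b - Cim a * Cim b) (Cre a * Cim b + Cim a * Cre b).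
Definition Cone : Cplx := mkC 1 0.
Definition RtoC (r : R) : Cplx := mkC r 0.
Definition Cmod (a : Cplx) : R := sqrt (Cre a * Cre a + Cim a * Cim a).

Record CBanach := {
  car :> Type;
  vadd : car -> car -> car;
  vzero : car;
  vopp : car -> car;
  vscal : Cplx -> car -> car;
  vnorm : car -> R;
  vadd_assoc : forall x y z, vadd x (vadd y z) = vadd (vadd x y) z;
  vadd_comm : forall x y, vadd x y = vadd y x;
  vadd_0 : forall x, vadd vzero x = x;
  vadd_opp : forall x, vadd x (vopp x) = vzero;
  vscal_mul : forall a b x, vscal (Cmul a b) x = vscal a (vscal b x);
  vscal_1 : forall x, vscal Cone x = x;
  vscal_addv : forall a x y, vscal a (vadd x y) = vadd (vscal a x) (vscal a y);
  vscal_adds : forall a b x, vscal (Cadd a b) x = vadd (vscal a x) (vscal b x);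
  vnorm_nonneg : forall x, 0 <= vnorm x;
  vnorm_eq0 : forall x, vnorm x = 0 -> x = vzero;
  vnorm_scal : forall a x, vnorm (vscal a x) = Cmod a * vnorm x;
  vnorm_triangle : forall x y, vnorm (vadd x y) <= vnorm x + vnorm y;
  vcomplete : forall u : nat -> car,
    (forall eps, eps > 0 -> exists N, forall m n, (N <= m)%nat -> (N <= n)%nat ->
       vnorm (vadd (u m) (vopp (u n))) < eps) ->
    exists l, forall eps, eps > 0 -> exists N, forall n, (N <= n)%nat ->
       vnorm (vadd (u n) (vopp l)) < eps
}.

Arguments vadd {c}. Arguments vzero {c}. Arguments vopp {c}.
Arguments vscal {c}. Arguments vnorm {c}.

Section Banach.
Variable X : CBanach.

Definition seq_cv (u : nat -> X) (l : X) : Prop :=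
  forall eps, eps > 0 -> exists N, forall n, (N <= n)%nat ->
    vnorm (vadd (u n) (vopp l)) < eps.

Fixpoint psum (u : nat -> X) (n : nat) : X :=
  match n with
  | O => u O
  | S m => vadd (psum u m) (u (S m))
  end.

Definition series_cv (u : nat -> X) (l : X) : Prop := seq_cv (psum u) l.

Definition bounded_op (T : X -> X) : Prop :=
  (forall x y, T (vadd x y) = vadd (T x) (T y)) /\
  (forall a x, T (vscal a x) = vscal a (T x)) /\
  (exists M, forall x, vnorm (T x) <= M * vnorm x).

Definition opow (T : X -> X) (n : nat) (x : X) : X := Nat.iter n T x.

(** Rademacher average: rad_aux acc [x1;..;xk] is the mean over all
    sign choices (e1,..,ek) in {-1,1}^k of || acc + sum_j ej xj ||, i.e.
    the integral over Omega w.r.t. independent Rademacher variables. *)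
Fixpoint rad_aux (acc : X) (xs : list X) : R :=
  match xs with
  | nil => vnorm acc
  | cons x xs' => (rad_aux (vadd acc x) xs' + rad_aux (vadd acc (vopp x)) xs') / 2
  end.

Definition Rnorm (xs : list X) : R := rad_aux vzero xs.

Definition R_bounded (F : (X -> X) -> Prop) : Prop :=
  exists K, forall ps : list ((X -> X) * X),
    List.Forall (fun p => F (fst p)) ps ->
    Rnorm (List.map (fun p => fst p (snd p)) ps) <= K * Rnorm (List.map snd ps).

(** Schauder decompositions; D n stands for X_{n+1} (indexing from 0). *)
Definition subspace (V : X -> Prop) : Prop :=
  V vzero /\ (forall x y, V x -> V y -> V (vadd x y)) /\
  (forall a x, V x -> V (vscal a x)).

Definition closed_set (V : X -> Prop) : Prop :=
  forall u l, (forall n, V (u n)) -> seq_cv u l -> V l.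

Definition expansion (D : nat -> X -> Prop) (x : X) (xs : nat -> X) : Prop :=
  (forall n, D n (xs n)) /\ series_cv xs x.

Definition schauder_decomposition (D : nat -> X -> Prop) : Prop :=
  (forall n, subspace (D n) /\ closed_set (D n)) /\
  (forall x, exists xs, expansion D x xs) /\
  (forall x xs ys, expansion D x xs -> expansion D x ys -> forall n, xs n = ys n).

(** The partial-sum projections P_N, N >= 1: P_N x = x_1 + ... + x_N *)
Definition partial_projections (D : nat -> X -> Prop) : (X -> X) -> Prop :=
  fun P => exists N : nat, forall x xs, expansion D x xs -> P x = psum xs N.

Definition R_schauder (D : nat -> X -> Prop) : Prop :=
  R_bounded (partial_projections D).

Definition multiplier (D : nat -> X -> Prop) (c : nat -> R) (T : X -> X) : Prop :=
  forall x xs, expansion D x xs ->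
    series_cv (fun n => vscal (RtoC (c n)) (xs n)) (T x).

Definition is_exp_neg (t : R) (B : X -> X) (S : X -> X) : Prop :=
  forall x, series_cv (fun k => vscal (RtoC ((- t) ^ k / INR (fact k))) (opow B k x)) (S x).

Definition ritt (T : X -> X) : Prop :=
  (exists M, forall n x, vnorm (opow T n x) <= M * vnorm x) /\
  (exists M, forall n x, (1 <= n)%nat ->
     vnorm (vscal (RtoC (INR n)) (opow T n (vadd x (vopp (T x))))) <= M * vnorm x).

End Banach.

Arguments seq_cv {X}. Arguments psum {X}. Arguments series_cv {X}.
Arguments bounded_op {X}. Arguments opow {X}. Arguments Rnorm {X}.
Arguments R_bounded {X}. Arguments expansion {X}.
Arguments schauder_decomposition {X}. Arguments partial_projections {X}.
Arguments R_schauder {X}. Arguments multiplier {X}. Arguments is_exp_neg {X}.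
Arguments ritt {X}.

(* Main.v *)
Require Import Defs.
From Stdlib Require Import Reals Lra Lia Psatz Arith List Classical.
From Stdlib Require Import IndefiniteDescription ClassicalEpsilon.
Open Scope R_scope.

Lemma Cmul_RtoC r s : Cmul (RtoC r) (RtoC s) = RtoC (r*s).
Proof. unfold Cmul, RtoC; simpl; f_equal; ring. Qed.
Lemma Cadd_RtoC r s : Cadd (RtoC r) (RtoC s) = RtoC (r+s).
Proof. unfold Cadd, RtoC; simpl; f_equal; ring. Qed.
Lemma Cmod_RtoC r : Cmod (RtoC r) = Rabs r.
Proof. unfold Cmod, RtoC; simpl. replace (r*r+0*0) with (Rsqr r) by (unfold Rsqr; ring).
  apply sqrt_Rsqr_abs. Qed.
Lemma RtoC_1 : RtoC 1 = Cone. Proof. reflexivity. Qed.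
Lemma Cmul_comm a b : Cmul a b = Cmul b a.
Proof. unfold Cmul; f_equal; ring. Qed.
Lemma Cmod_nonneg a : 0 <= Cmod a. Proof. apply sqrt_pos. Qed.

Section Basic.
Variable X : CBanach.
Implicit Types x y z : X.

Definition vsub (x y : X) : X := vadd x (vopp y).
Definition sc (r : R) (x : X) : X := vscal (RtoC r) x.

Lemma vadd_0r x : vadd x vzero = x.
Proof. rewrite vadd_comm; apply vadd_0. Qed.

Lemma vadd_cancel x y z : vadd x y = vadd x z -> y = z.
Proof. intro H. rewrite <- (vadd_0 _ y), <- (vadd_0 _ z).
  rewrite <- (vadd_opp _ x). rewrite (vadd_comm _ x (vopp x)), <- !vadd_assoc, H; auto. Qed.

Lemma sc_add r s x : sc (r+s) x = vadd (sc r x) (sc s x).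
Proof. unfold sc; rewrite <- Cadd_RtoC; apply vscal_adds. Qed.
Lemma sc_addv r x y : sc r (vadd x y) = vadd (sc r x) (sc r y).
Proof. apply vscal_addv. Qed.
Lemma sc_mul r s x : sc r (sc s x) = sc (r*s) x.
Proof. unfold sc; rewrite <- Cmul_RtoC, vscal_mul; auto. Qed.
Lemma sc_1 x : sc 1 x = x. Proof. apply vscal_1. Qed.
Lemma sc_0 x : sc 0 x = vzero.
Proof. apply (vadd_cancel (sc 0 x)). rewrite vadd_0r. rewrite <- (sc_add 0 0 x). rewrite Rplus_0_r; auto. Qed.
Lemma vscal_sc a r x : vscal a (sc r x) = sc r (vscal a x).
Proof. unfold sc; rewrite <- !vscal_mul, Cmul_comm; auto. Qed.
Lemma vopp_sc x : vopp x = sc (-1) x.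
Proof. apply (vadd_cancel x). rewrite vadd_opp.
  rewrite <- (sc_1 x) at 1. rewrite <- sc_add. replace (1 + -1) with 0 by ring. rewrite sc_0; auto. Qed.
Lemma sc_zero r : sc r vzero = vzero.
Proof. apply (vadd_cancel (sc r vzero)). rewrite <- sc_addv, !vadd_0r; auto. Qed.
Lemma vnorm_sc r x : vnorm (sc r x) = Rabs r * vnorm x.
Proof. unfold sc; rewrite vnorm_scal, Cmod_RtoC; auto. Qed.
Lemma vnorm_zero : vnorm (vzero : X) = 0.
Proof. rewrite <- (sc_0 vzero), vnorm_sc, Rabs_R0; ring. Qed.
Lemma vnorm_opp x : vnorm (vopp x) = vnorm x.
Proof. rewrite vopp_sc, vnorm_sc. replace (Rabs (-1)) with 1 by (rewrite Rabs_left; lra); ring. Qed.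
Lemma vopp_add x y : vopp (vadd x y) = vadd (vopp x) (vopp y).
Proof. rewrite !vopp_sc; apply sc_addv. Qed.
Lemma vopp_opp x : vopp (vopp x) = x.
Proof. rewrite !vopp_sc, sc_mul. replace (-1 * -1) with 1 by ring. apply sc_1. Qed.
Lemma vopp_zero : vopp (vzero:X) = vzero.
Proof. rewrite vopp_sc; apply sc_zero. Qed.
Lemma vadd_opp_l x : vadd (vopp x) x = vzero.
Proof. rewrite vadd_comm; apply vadd_opp. Qed.
Lemma vopp_sc' r x : vopp (sc r x) = sc (-r) x.
Proof. rewrite vopp_sc, sc_mul; f_equal; ring. Qed.
Lemma vscal_opp a x : vscal a (vopp x) = vopp (vscal a x).
Proof. rewrite !vopp_sc. unfold sc. rewrite <- !vscal_mul, Cmul_comm; auto. Qed.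

Lemma vadd_swap (a b c d : X) : vadd (vadd a b) (vadd c d) = vadd (vadd a c) (vadd b d).
Proof. rewrite !vadd_assoc. f_equal. rewrite <- !vadd_assoc. f_equal. apply vadd_comm. Qed.
Lemma vsub_add (a b c d : X) : vsub (vadd a b) (vadd c d) = vadd (vsub a c) (vsub b d).
Proof. unfold vsub. rewrite vopp_add. apply vadd_swap. Qed.
Lemma vsub_diag x : vsub x x = vzero. Proof. apply vadd_opp. Qed.
Lemma vsub_0r x : vsub x vzero = x. Proof. unfold vsub; rewrite vopp_zero; apply vadd_0r. Qed.
Lemma vsub_0l x : vsub vzero x = vopp x. Proof. unfold vsub; apply vadd_0. Qed.
Lemma vsub_opp x y : vopp (vsub x y) = vsub y x.
Proof. unfold vsub; rewrite vopp_add, vopp_opp; apply vadd_comm. Qed.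
Lemma vsub_trans x y z : vsub x z = vadd (vsub x y) (vsub y z).
Proof. unfold vsub. rewrite <- (vadd_assoc _ x (vopp y)). rewrite (vadd_assoc _ (vopp y) y).
  rewrite vadd_opp_l, vadd_0; auto. Qed.
Lemma vadd_sub x y : vadd (vsub x y) y = x.
Proof. unfold vsub. rewrite <- vadd_assoc, vadd_opp_l, vadd_0r; auto. Qed.
Lemma vsub_add_l x y : vsub (vadd x y) x = y.
Proof. unfold vsub. rewrite (vadd_comm _ x y), <- vadd_assoc, vadd_opp, vadd_0r; auto. Qed.
Lemma sc_sub r x y : sc r (vsub x y) = vsub (sc r x) (sc r y).
Proof. unfold vsub. rewrite sc_addv, vopp_sc, sc_mul, vopp_sc, sc_mul, Rmult_comm; auto. Qed.
Lemma sc_subs r s x : sc (r - s) x = vsub (sc r x) (sc s x).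
Proof. unfold vsub, Rminus. rewrite sc_add, vopp_sc'. auto. Qed.
Lemma vsub_eq0 x y : vsub x y = vzero -> x = y.
Proof. intro H. rewrite <- (vadd_sub x y), H, vadd_0; auto. Qed.

Lemma vnorm_sub_sym x y : vnorm (vsub x y) = vnorm (vsub y x).
Proof. rewrite <- vsub_opp, vnorm_opp; auto. Qed.
Lemma vnorm_dist x y z : vnorm (vsub x z) <= vnorm (vsub x y) + vnorm (vsub y z).
Proof. rewrite (vsub_trans x y z); apply vnorm_triangle. Qed.
Lemma vnorm_sub_le x y : vnorm (vsub x y) <= vnorm x + vnorm y.
Proof. unfold vsub; rewrite <- (vnorm_opp y); apply vnorm_triangle. Qed.
Lemma vnorm_rev x y : vnorm x - vnorm y <= vnorm (vsub x y).
Proof. pose proof (vnorm_triangle _ (vsub x y) y). rewrite vadd_sub in H. lra. Qed.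
Lemma vnorm_ge0 x : 0 <= vnorm x. Proof. apply vnorm_nonneg. Qed.

Lemma seq_cv_unique (u : nat -> X) l1 l2 : seq_cv u l1 -> seq_cv u l2 -> l1 = l2.
Proof.
  intros H1 H2. apply vsub_eq0, vnorm_eq0.
  apply Rle_antisym; [|apply vnorm_nonneg].
  apply Rnot_lt_le; intro Hp.
  assert (He : vnorm (vsub l1 l2)/2 > 0) by lra.
  destruct (H1 _ He) as [N1 HN1].
  destruct (H2 _ He) as [N2 HN2].
  specialize (HN1 (max N1 N2) ltac:(lia)). specialize (HN2 (max N1 N2) ltac:(lia)).
  fold (vsub (u (max N1 N2)) l1) in HN1. fold (vsub (u (max N1 N2)) l2) in HN2.
  pose proof (vnorm_dist l1 (u (max N1 N2)) l2). rewrite (vnorm_sub_sym l1 (u _)) in H. lra.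
Qed.

Lemma seq_cv_ext (u v : nat -> X) l : (forall n, u n = v n) -> seq_cv u l -> seq_cv v l.
Proof. intros E H eps He. destruct (H eps He) as [N HN]. exists N; intros n Hn. rewrite <- E; auto. Qed.

Lemma seq_cv_ext_ev (u v : nat -> X) l M : (forall n, (M <= n)%nat -> u n = v n) -> seq_cv u l -> seq_cv v l.
Proof. intros E H eps He. destruct (H eps He) as [N HN]. exists (max N M); intros n Hn.
  rewrite <- E by lia; apply HN; lia. Qed.

Lemma seq_cv_const (l : X) : seq_cv (fun _ => l) l.
Proof. intros eps He; exists O; intros. fold (vsub l l). rewrite vsub_diag, vnorm_zero; lra. Qed.

Lemma seq_cv_iff (u : nat -> X) l : seq_cv u l <-> forall eps, eps > 0 -> exists N, forall n, (N <= n)%nat -> vnorm (vsub (u n) l) < eps.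
Proof. split; auto. Qed.

Lemma seq_cv_add (u v : nat -> X) a b : seq_cv u a -> seq_cv v b -> seq_cv (fun n => vadd (u n) (v n)) (vadd a b).
Proof.
  intros Hu Hv eps He. destruct (Hu (eps/2) ltac:(lra)) as [N1 H1]. destruct (Hv (eps/2) ltac:(lra)) as [N2 H2].
  exists (max N1 N2); intros n Hn. fold (vsub (vadd (u n) (v n)) (vadd a b)). rewrite vsub_add.
  eapply Rle_lt_trans; [apply vnorm_triangle|]. specialize (H1 n ltac:(lia)); specialize (H2 n ltac:(lia)).
  fold (vsub (u n) a) in H1; fold (vsub (v n) b) in H2. lra.
Qed.

Lemma seq_cv_vscal (u : nat -> X) a l : seq_cv u l -> seq_cv (fun n => vscal a (u n)) (vscal a l).
Proof.
  intros Hu eps He. pose proof (Cmod_nonneg a).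
  destruct (Hu (eps/(Cmod a + 1))) as [N HN].
  { apply Rdiv_lt_0_compat; lra. }
  exists N; intros n Hn. specialize (HN n Hn).
  rewrite <- vscal_opp, <- vscal_addv, vnorm_scal.
  apply Rle_lt_trans with ((Cmod a + 1) * vnorm (vadd (u n) (vopp l))).
  { pose proof (vnorm_nonneg _ (vadd (u n) (vopp l))). nra. }
  apply Rmult_lt_reg_l with (/(Cmod a +1)). { apply Rinv_0_lt_compat; lra. }
  rewrite <- Rmult_assoc, Rinv_l by lra. rewrite Rmult_1_l. unfold Rdiv in HN. lra.
Qed.

Lemma seq_cv_sc (u : nat -> X) r l : seq_cv u l -> seq_cv (fun n => sc r (u n)) (sc r l).
Proof. apply seq_cv_vscal. Qed.

Lemma seq_cv_opp (u : nat -> X) l : seq_cv u l -> seq_cv (fun n => vopp (u n)) (vopp l).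
Proof. intro H. rewrite vopp_sc. apply (seq_cv_ext (fun n => sc (-1) (u n))).
  { intro; rewrite vopp_sc; auto. } apply seq_cv_sc; auto. Qed.

Lemma seq_cv_sub (u v : nat -> X) a b : seq_cv u a -> seq_cv v b -> seq_cv (fun n => vsub (u n) (v n)) (vsub a b).
Proof. intros; apply seq_cv_add; auto; apply seq_cv_opp; auto. Qed.

Lemma seq_cv_scal_seq (r : nat -> R) (v : X) s : Un_cv r s -> seq_cv (fun n => sc (r n) v) (sc s v).
Proof.
  intros H eps He. destruct (H (eps/(vnorm v + 1))) as [N HN].
  { pose proof (vnorm_nonneg _ v). apply Rdiv_lt_0_compat; lra. }
  exists N; intros n Hn. specialize (HN n Hn). unfold R_dist in HN.
  fold (vsub (sc (r n) v) (sc s v)). rewrite <- sc_subs, vnorm_sc.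
  pose proof (vnorm_nonneg _ v). pose proof (Rabs_pos (r n - s)).
  apply Rle_lt_trans with (Rabs (r n - s) * (vnorm v + 1)). nra.
  apply Rmult_lt_reg_r with (/(vnorm v +1)). { apply Rinv_0_lt_compat; lra. }
  rewrite Rmult_assoc, Rinv_r by lra. rewrite Rmult_1_r. unfold Rdiv in HN. lra.
Qed.

Lemma seq_cv_norm_le (u : nat -> X) l C M : seq_cv u l -> (forall n, (M <= n)%nat -> vnorm (u n) <= C) -> vnorm l <= C.
Proof.
  intros H Hb. apply Rnot_lt_le; intro Hc.
  destruct (H (vnorm l - C) ltac:(lra)) as [N HN]. specialize (HN (max N M) ltac:(lia)).
  specialize (Hb (max N M) ltac:(lia)). fold (vsub (u (max N M)) l) in HN.
  rewrite vnorm_sub_sym in HN. pose proof (vnorm_rev l (u (max N M))). lra.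
Qed.

Lemma seq_cv_dist_le (u : nat -> X) l y C M : seq_cv u l -> (forall n, (M <= n)%nat -> vnorm (vsub (u n) y) <= C) -> vnorm (vsub l y) <= C.
Proof. intros H Hb. apply (seq_cv_norm_le (fun n => vsub (u n) y) _ C M); auto.
  apply seq_cv_sub; auto; apply seq_cv_const. Qed.

Definition cauchy (u : nat -> X) := forall eps, eps > 0 -> exists N, forall m n, (N <= m)%nat -> (N <= n)%nat -> vnorm (vsub (u m) (u n)) < eps.

Lemma cauchy_cv (u : nat -> X) : cauchy u -> exists l, seq_cv u l.
Proof. intro H. apply vcomplete. exact H. Qed.

Lemma cv_cauchy (u : nat -> X) l : seq_cv u l -> cauchy u.
Proof. intros H eps He. destruct (H (eps/2) ltac:(lra)) as [N HN]. exists N; intros m n Hm Hn.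
  eapply Rle_lt_trans; [apply (vnorm_dist _ l)|]. pose proof (HN n Hn) as HN'. specialize (HN m Hm).
  fold (vsub (u m) l) in HN. fold (vsub (u n) l) in HN'. rewrite (vnorm_sub_sym l). lra. Qed.

End Basic.
Arguments vadd_0r {X}.
Arguments vadd_cancel {X}.
Arguments sc_add {X}.
Arguments sc_addv {X}.
Arguments sc_mul {X}.
Arguments sc_1 {X}.
Arguments sc_0 {X}.
Arguments vscal_sc {X}.
Arguments vopp_sc {X}.
Arguments sc_zero {X}.
Arguments vnorm_sc {X}.
Arguments vnorm_zero {X}.
Arguments vnorm_opp {X}.
Arguments vopp_add {X}.
Arguments vopp_opp {X}.
Arguments vopp_zero {X}.
Arguments vadd_opp_l {X}.
Arguments vopp_sc {X}.
Arguments vscal_opp {X}.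
Arguments vadd_swap {X}.
Arguments vsub_add {X}.
Arguments vsub_diag {X}.
Arguments vsub_0r {X}.
Arguments vsub_0l {X}.
Arguments vsub_opp {X}.
Arguments vsub_trans {X}.
Arguments vadd_sub {X}.
Arguments vsub_add_l {X}.
Arguments sc_sub {X}.
Arguments sc_subs {X}.
Arguments vsub_eq0 {X}.
Arguments vnorm_sub_sym {X}.
Arguments vnorm_dist {X}.
Arguments vnorm_sub_le {X}.
Arguments vnorm_rev {X}.
Arguments vnorm_ge0 {X}.
Arguments seq_cv_unique {X}.
Arguments seq_cv_ext {X}.
Arguments seq_cv_ext_ev {X}.
Arguments seq_cv_const {X}.
Arguments seq_cv_iff {X}.
Arguments seq_cv_add {X}.
Arguments seq_cv_vscal {X}.
Arguments seq_cv_sc {X}.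
Arguments seq_cv_opp {X}.
Arguments seq_cv_sub {X}.
Arguments seq_cv_scal_seq {X}.
Arguments seq_cv_norm_le {X}.
Arguments seq_cv_dist_le {X}.
Arguments cauchy_cv {X}.
Arguments cv_cauchy {X}.
Arguments vsub {X}. Arguments sc {X}. Arguments cauchy {X}.

Section Psum.
Variable X : CBanach.

Lemma psum_ext (u v : nat -> X) n : (forall k, (k <= n)%nat -> u k = v k) -> psum u n = psum v n.
Proof. induction n; intro H; simpl. apply H; lia. rewrite IHn by (intros; apply H; lia). rewrite H by lia; auto. Qed.

Lemma psum_add (u v : nat -> X) n : psum (fun k => vadd (u k) (v k)) n = vadd (psum u n) (psum v n).
Proof. induction n; simpl; auto. rewrite IHn. apply vadd_swap. Qed.

Lemma psum_vscal (u : nat -> X) a n : psum (fun k => vscal a (u k)) n = vscal a (psum u n).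
Proof. induction n; simpl; auto. rewrite IHn, vscal_addv; auto. Qed.

Lemma psum_sc (u : nat -> X) r n : psum (fun k => sc r (u k)) n = sc r (psum u n).
Proof. apply psum_vscal. Qed.

Lemma psum_opp (u : nat -> X) n : psum (fun k => vopp (u k)) n = vopp (psum u n).
Proof. induction n; simpl; auto. rewrite IHn, vopp_add; auto. Qed.

Lemma psum_sub (u v : nat -> X) n : psum (fun k => vsub (u k) (v k)) n = vsub (psum u n) (psum v n).
Proof. unfold vsub. rewrite psum_add, psum_opp; auto. Qed.

Lemma psum_zero n : psum (fun _ => (vzero : X)) n = vzero.
Proof. induction n; simpl; auto. rewrite IHn, vadd_0; auto. Qed.

Lemma psum_norm (u : nat -> X) n : vnorm (psum u n) <= sum_f_R0 (fun k => vnorm (u k)) n.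
Proof. induction n; simpl. lra. eapply Rle_trans; [apply vnorm_triangle|]. lra. Qed.

Lemma psum_tail (u : nat -> X) m : (forall k, (m < k)%nat -> u k = vzero) -> forall n, (m <= n)%nat -> psum u n = psum u m.
Proof. intros H n Hn. induction Hn; auto. simpl. rewrite H by lia. rewrite vadd_0r; auto. Qed.

Lemma psum_succ_sub (u : nat -> X) n : vsub (psum u (S n)) (psum u n) = u (S n).
Proof. simpl. apply vsub_add_l. Qed.

Lemma psum_in (V : X -> Prop) (u : nat -> X) n : subspace X V -> (forall k, V (u k)) -> V (psum u n).
Proof. intros [H0 [Ha Hs]] Hu. induction n; simpl; auto. Qed.

Lemma sub_opp (V : X -> Prop) x : subspace X V -> V x -> V (vopp x).
Proof. intros [H0 [Ha Hs]] Hx. rewrite vopp_sc. apply Hs; auto. Qed.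
Lemma sub_sub (V : X -> Prop) x y : subspace X V -> V x -> V y -> V (vsub x y).
Proof. intros HV Hx Hy. pose proof HV as [H0 [Ha Hs]]. apply Ha; auto. apply sub_opp; auto. Qed.

Lemma series_cv_add (u v : nat -> X) a b : series_cv u a -> series_cv v b -> series_cv (fun n => vadd (u n) (v n)) (vadd a b).
Proof. unfold series_cv; intros. eapply seq_cv_ext; [intro; symmetry; apply psum_add|]. apply seq_cv_add; auto. Qed.
Lemma series_cv_vscal (u : nat -> X) a l : series_cv u l -> series_cv (fun n => vscal a (u n)) (vscal a l).
Proof. unfold series_cv; intros. eapply seq_cv_ext; [intro; symmetry; apply psum_vscal|]. apply seq_cv_vscal; auto. Qed.
Lemma series_cv_sub (u v : nat -> X) a b : series_cv u a -> series_cv v b -> series_cv (fun n => vsub (u n) (v n)) (vsub a b).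
Proof. unfold series_cv; intros. eapply seq_cv_ext; [intro; symmetry; apply psum_sub|]. apply seq_cv_sub; auto. Qed.
Lemma series_cv_ext (u v : nat -> X) l : (forall n, u n = v n) -> series_cv u l -> series_cv v l.
Proof. unfold series_cv; intros. eapply seq_cv_ext; [|eauto]. intro; apply psum_ext; auto. Qed.
Lemma series_cv_finite (u : nat -> X) m : (forall k, (m < k)%nat -> u k = vzero) -> series_cv u (psum u m).
Proof. intros H. unfold series_cv. eapply seq_cv_ext_ev with (M := m); [|apply seq_cv_const].
  intros; symmetry; apply psum_tail; auto. Qed.

End Psum.
Arguments psum_ext {X}.
Arguments psum_add {X}.
Arguments psum_vscal {X}.
Arguments psum_sc {X}.
Arguments psum_opp {X}.
Arguments psum_sub {X}.
Arguments psum_norm {X}.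
Arguments psum_tail {X}.
Arguments psum_succ_sub {X}.
Arguments psum_in {X}.
Arguments sub_opp {X}.
Arguments sub_sub {X}.
Arguments series_cv_add {X}.
Arguments series_cv_vscal {X}.
Arguments series_cv_sub {X}.
Arguments series_cv_ext {X}.
Arguments series_cv_finite {X}.
Arguments psum_zero {X}.

Section Expansion.
Variable X : CBanach.
Variable D : nat -> X -> Prop.
Hypothesis hD : schauder_decomposition D.

Definition ex (x : X) : nat -> X :=
  proj1_sig (constructive_indefinite_description _ (proj1 (proj2 hD) x)).

Lemma ex_spec x : expansion D x (ex x).
Proof. unfold ex. destruct constructive_indefinite_description; auto. Qed.

Lemma ex_uniq x xs : expansion D x xs -> forall n, xs n = ex x n.
Proof. intros H n. destruct hD as [_ [_ U]]. apply (U x); auto. apply ex_spec. Qed.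

Lemma D_sub n : subspace X (D n). Proof. apply (proj1 hD n). Qed.
Lemma D_zero n : D n vzero. Proof. apply (proj1 (D_sub n)). Qed.
Lemma D_add n x y : D n x -> D n y -> D n (vadd x y). Proof. apply (proj1 (proj2 (D_sub n))). Qed.
Lemma D_vscal n a x : D n x -> D n (vscal a x). Proof. apply (proj2 (proj2 (D_sub n))). Qed.
Lemma D_closed n : Defs.closed_set X (D n). Proof. apply (proj1 hD n). Qed.

Lemma ex_in x n : D n (ex x n). Proof. apply (proj1 (ex_spec x)). Qed.
Lemma ex_cv x : series_cv (ex x) x. Proof. apply (proj2 (ex_spec x)). Qed.

Lemma ex_add x y n : ex (vadd x y) n = vadd (ex x n) (ex y n).
Proof. symmetry. apply (ex_uniq _ (fun k => vadd (ex x k) (ex y k))). split.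
  - intro k. first [apply D_add|apply D_vscal]; apply ex_in.
  - apply series_cv_add; apply ex_cv. Qed.

Lemma ex_vscal a x n : ex (vscal a x) n = vscal a (ex x n).
Proof. symmetry. apply (ex_uniq _ (fun k => vscal a (ex x k))). split.
  - intro k. first [apply D_add|apply D_vscal]; apply ex_in.
  - apply series_cv_vscal; apply ex_cv. Qed.

Lemma ex_sc r x n : ex (sc r x) n = sc r (ex x n). Proof. apply ex_vscal. Qed.

Lemma ex_sub x y n : ex (vsub x y) n = vsub (ex x n) (ex y n).
Proof. symmetry. apply (ex_uniq _ (fun k => vsub (ex x k) (ex y k))). split.
  - intro k. apply sub_sub; [apply D_sub| |]; apply ex_in.
  - apply series_cv_sub; apply ex_cv. Qed.

Lemma ex_finite (u : nat -> X) m : (forall k, D k (u k)) -> (forall k, (m < k)%nat -> u k = vzero) ->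
  forall n, ex (psum u m) n = u n.
Proof. intros H1 H2 n. symmetry. apply (ex_uniq _ u). split; auto. apply series_cv_finite; auto. Qed.

Lemma ex_D k v n : D k v -> ex v n = if Nat.eqb n k then v else vzero.
Proof. intros Hv. symmetry. apply (ex_uniq _ (fun n => if Nat.eqb n k then v else vzero)). split.
  - intro j. destruct (Nat.eqb_spec j k); subst; auto. apply D_zero.
  - pose proof (series_cv_finite (fun j => if Nat.eqb j k then v else vzero) k).
    assert (psum (fun j => if Nat.eqb j k then v else vzero) k = v).
    { destruct k. simpl; auto. simpl. rewrite Nat.eqb_refl.
      rewrite (psum_ext _ (fun _ => vzero)). rewrite psum_zero, vadd_0; auto.
      intros j Hj. destruct (Nat.eqb_spec j (S k)); auto; lia. }
    rewrite H0 in H. apply H. intros j Hj. destruct (Nat.eqb_spec j k); auto; lia. Qed.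

Lemma ex_zero n : ex vzero n = vzero.
Proof. transitivity (ex (sc 0 vzero) n). rewrite sc_0; auto. rewrite ex_sc, sc_0; auto. Qed.

Definition PP (N : nat) (x : X) : X := psum (ex x) N.

Lemma PP_add N x y : PP N (vadd x y) = vadd (PP N x) (PP N y).
Proof. unfold PP. rewrite <- psum_add. apply psum_ext; intros; apply ex_add. Qed.
Lemma PP_vscal N a x : PP N (vscal a x) = vscal a (PP N x).
Proof. unfold PP. rewrite <- psum_vscal. apply psum_ext; intros; apply ex_vscal. Qed.
Lemma PP_sc N r x : PP N (sc r x) = sc r (PP N x). Proof. apply PP_vscal. Qed.
Lemma PP_sub N x y : PP N (vsub x y) = vsub (PP N x) (PP N y).
Proof. unfold PP. rewrite <- psum_sub. apply psum_ext; intros; apply ex_sub. Qed.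
Lemma PP_zero N : PP N vzero = vzero.
Proof. transitivity (PP N (sc 0 vzero)). rewrite sc_0; auto. rewrite PP_sc, sc_0; auto. Qed.
Lemma PP_cv x : seq_cv (fun N => PP N x) x. Proof. apply ex_cv. Qed.

Lemma ex_PP N x n : ex (PP N x) n = if Nat.leb n N then ex x n else vzero.
Proof. unfold PP. rewrite (psum_ext _ (fun k => if Nat.leb k N then ex x k else vzero)).
  - apply ex_finite. intro k; destruct (Nat.leb k N); auto; [apply ex_in| apply D_zero].
    intros k Hk. destruct (Nat.leb_spec k N); auto; lia.
  - intros k Hk. destruct (Nat.leb_spec k N); auto; lia. Qed.

Lemma PP_PP M N x : PP M (PP N x) = PP (Nat.min M N) x.
Proof. unfold PP at 1. rewrite (psum_ext _ (fun k => if Nat.leb k N then ex x k else vzero)).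
  2:{ intros; apply ex_PP. }
  destruct (Nat.le_ge_cases M N).
  - rewrite Nat.min_l by auto. apply psum_ext. intros k Hk. destruct (Nat.leb_spec k N); auto; lia.
  - rewrite Nat.min_r by auto. rewrite psum_tail with (m := N); auto.
    apply psum_ext. intros k Hk. destruct (Nat.leb_spec k N); auto; lia.
    intros k Hk. destruct (Nat.leb_spec k N); auto; lia. Qed.

Lemma PP_finite y b : (forall n, (b < n)%nat -> ex y n = vzero) -> PP b y = y.
Proof. intros H. apply (seq_cv_unique (fun N => PP N y)).
  - unfold PP. eapply seq_cv_ext_ev with (M := b); [|apply seq_cv_const].
    intros; symmetry; apply psum_tail; auto.
  - apply PP_cv. Qed.

Lemma ex_succ N x : vsub (PP (S N) x) (PP N x) = ex x (S N).
Proof. apply psum_succ_sub. Qed.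

Lemma multiplier_of (c : nat -> R) T : (forall x, series_cv (fun n => sc (c n) (ex x n)) (T x)) -> multiplier D c T.
Proof. intros H x xs Hx. eapply series_cv_ext; [|apply (H x)]. intro n; simpl. rewrite (ex_uniq x xs Hx n); auto. Qed.

End Expansion.
Arguments ex {X D}.
Arguments ex_spec {X D}.
Arguments ex_uniq {X D}.
Arguments D_sub {X D}.
Arguments D_zero {X D}.
Arguments D_add {X D}.
Arguments D_vscal {X D}.
Arguments D_closed {X D}.
Arguments ex_in {X D}.
Arguments ex_cv {X D}.
Arguments ex_add {X D}.
Arguments ex_vscal {X D}.
Arguments ex_sc {X D}.
Arguments ex_sub {X D}.
Arguments ex_finite {X D}.
Arguments ex_D {X D}.
Arguments ex_zero {X D}.
Arguments PP {X D}.
Arguments PP_add {X D}.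
Arguments PP_vscal {X D}.
Arguments PP_sc {X D}.
Arguments PP_sub {X D}.
Arguments PP_zero {X D}.
Arguments PP_cv {X D}.
Arguments ex_PP {X D}.
Arguments PP_PP {X D}.
Arguments PP_finite {X D}.
Arguments ex_succ {X D}.
Arguments multiplier_of {X D}.

Lemma sum_term_le (f : nat -> R) i n : (forall k, 0 <= f k) -> (i <= n)%nat -> f i <= sum_f_R0 f n.
Proof. intros H Hi. induction Hi. destruct i; simpl; [lra|]. pose proof (cond_pos_sum f i H). lra.
  simpl. specialize (H (S m)). lra. Qed.

Lemma choice_fun {A B : Type} (P : A -> B -> Prop) : (forall a, exists b, P a b) -> exists f : A -> B, forall a, P a (f a).
Proof. intro H. exists (fun a => proj1_sig (constructive_indefinite_description _ (H a))).
  intro a. destruct constructive_indefinite_description; auto. Qed.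

Lemma vsub_sub_r {X : CBanach} (a b c : X) : vsub a (vsub b c) = vadd (vsub a b) c.
Proof. unfold vsub. rewrite vopp_add, vopp_opp, vadd_assoc; auto. Qed.

Lemma vsub_comm2 {X : CBanach} (a b c : X) : vsub (vsub a b) c = vsub (vsub a c) b.
Proof. unfold vsub. rewrite <- !vadd_assoc. f_equal. apply vadd_comm. Qed.
Lemma vsub_add_r {X : CBanach} (a b c : X) : vsub (vadd a b) c = vadd (vsub a c) b.
Proof. unfold vsub. rewrite <- !vadd_assoc. f_equal. apply vadd_comm. Qed.

Lemma vsub_vsub_same {X : CBanach} (x0 w z1 z2 : X) :
  vsub w (vsub z1 z2) = vsub (vsub (vadd x0 w) z1) (vsub x0 z2).
Proof. rewrite !vsub_sub_r. rewrite vsub_comm2, vsub_add_l. auto. Qed.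

Section Beta.
Variable X : CBanach.
Variable D : nat -> X -> Prop.
Hypothesis hD : schauder_decomposition D.

Definition Eb (k : R) (x : X) := forall N, vnorm (PP hD N x) <= k.

Lemma Eb_sub a b x y : Eb a x -> Eb b y -> Eb (a+b) (vsub x y).
Proof. intros Hx Hy N. rewrite PP_sub. eapply Rle_trans; [apply vnorm_sub_le|]. specialize (Hx N); specialize (Hy N); lra. Qed.
Lemma Eb_add a b x y : Eb a x -> Eb b y -> Eb (a+b) (vadd x y).
Proof. intros Hx Hy N. rewrite PP_add. eapply Rle_trans; [apply vnorm_triangle|]. specialize (Hx N); specialize (Hy N); lra. Qed.
Lemma Eb_sc a t x : Eb a x -> Eb (Rabs t * a) (sc t x).
Proof. intros Hx N. rewrite PP_sc, vnorm_sc. apply Rmult_le_compat_l; auto. apply Rabs_pos. Qed.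
Lemma Eb_mono a b x : a <= b -> Eb a x -> Eb b x.
Proof. intros H Hx N. specialize (Hx N); lra. Qed.
Lemma Eb_zero : Eb 0 vzero.
Proof. intro N. rewrite PP_zero, vnorm_zero; lra. Qed.

Lemma bounded_PP x : exists k : nat, Eb (INR k) x.
Proof.
  destruct (PP_cv hD x 1 ltac:(lra)) as [N0 HN0].
  set (k := vnorm x + 1 + sum_f_R0 (fun M => vnorm (PP hD M x)) N0).
  destruct (INR_unbounded k) as [m Hm]. exists m. intro N.
  assert (vnorm (PP hD N x) <= k).
  { unfold k. pose proof (cond_pos_sum (fun M => vnorm (PP hD M x)) N0 (fun _ => vnorm_nonneg _ _)).
    pose proof (vnorm_nonneg _ x).
    destruct (Nat.le_ge_cases N N0).
    - pose proof (sum_term_le (fun M => vnorm (PP hD M x)) N N0 (fun _ => vnorm_nonneg _ _) H1). simpl in H2. lra.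
    - specialize (HN0 N H1). fold (vsub (PP hD N x) x) in HN0. pose proof (vnorm_rev (PP hD N x) x). lra. }
  lra.
Qed.

Definition clE (k : R) (y : X) := forall eps, eps > 0 -> exists z, Eb k z /\ vnorm (vsub y z) < eps.

Lemma baire : exists (k : nat) x0 r, r > 0 /\ forall y, vnorm (vsub y x0) < r -> clE (INR k) y.
Proof.
  apply NNPP; intro Hn.
  assert (Hs : forall (k : nat) (p : X * R), exists q : X * R, snd p > 0 ->
     snd q > 0 /\ snd q <= snd p / 2 /\ vnorm (vsub (fst q) (fst p)) + snd q <= snd p /\
     forall z, Eb (INR k) z -> 2 * snd q <= vnorm (vsub (fst q) z)).
  { intros k [x0 r]. simpl.
    destruct (Rlt_dec 0 r) as [Hr|Hr]; [|exists (x0, r); intro; lra].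
    assert (exists y, vnorm (vsub y x0) < r /\ ~ clE (INR k) y) as [y [Hy Hc]].
    { apply NNPP; intro H. apply Hn. exists k, x0, r. split; [lra|]. intros y Hy.
      apply NNPP; intro H'. apply H; exists y; auto. }
    unfold clE in Hc. apply not_all_ex_not in Hc as [eps Hc].
    apply imply_to_and in Hc as [He Hc].
    exists (y, Rmin (eps/2) (Rmin (r - vnorm (vsub y x0)) (r/2))). simpl. intros _.
    assert (Hm1 := Rmin_l (eps/2) (Rmin (r - vnorm (vsub y x0)) (r/2))).
    assert (Hm2 := Rmin_r (eps/2) (Rmin (r - vnorm (vsub y x0)) (r/2))).
    assert (Hm3 := Rmin_l (r - vnorm (vsub y x0)) (r/2)).
    assert (Hm4 := Rmin_r (r - vnorm (vsub y x0)) (r/2)).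
    assert (0 < Rmin (eps/2) (Rmin (r - vnorm (vsub y x0)) (r/2))).
    { apply Rmin_pos; [lra|apply Rmin_pos; lra]. }
    split; [lra|]. split; [lra|]. split; [lra|].
    intros z Hz. apply Rnot_lt_le. intro Hlt. apply Hc. exists z. split; auto. lra. }
  destruct (choice_fun (fun (kp : nat * (X * R)) q => snd (snd kp) > 0 ->
     snd q > 0 /\ snd q <= snd (snd kp) / 2 /\ vnorm (vsub (fst q) (fst (snd kp))) + snd q <= snd (snd kp) /\
     forall z, Eb (INR (fst kp)) z -> 2 * snd q <= vnorm (vsub (fst q) z))) as [f Hf].
  { intros [k p]. apply Hs. }
  set (seqp := fix g (n : nat) : X * R := match n with O => (vzero, 1) | S m => f (m, g m) end).
  assert (Hpos : forall n, snd (seqp n) > 0).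
  { induction n. simpl; lra. simpl. apply (Hf (n, seqp n)); auto. }
  assert (Hstep : forall n, snd (seqp (S n)) <= snd (seqp n) / 2 /\
     vnorm (vsub (fst (seqp (S n))) (fst (seqp n))) + snd (seqp (S n)) <= snd (seqp n) /\
     forall z, Eb (INR n) z -> 2 * snd (seqp (S n)) <= vnorm (vsub (fst (seqp (S n))) z)).
  { intro n. destruct (Hf (n, seqp n) (Hpos n)) as [_ H]. exact H. }
  assert (Hnest : forall n m, (n <= m)%nat -> vnorm (vsub (fst (seqp m)) (fst (seqp n))) + snd (seqp m) <= snd (seqp n)).
  { intros n m Hnm. induction Hnm. rewrite vsub_diag, vnorm_zero; lra.
    destruct (Hstep m) as [_ [H2 _]]. pose proof (vnorm_dist (fst (seqp (S m))) (fst (seqp m)) (fst (seqp n))). lra. }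
  assert (Hrad : forall n, snd (seqp n) <= (/2)^n).
  { induction n. simpl; lra. replace ((/2)^(S n)) with (/2 * (/2)^n) by (simpl; ring). destruct (Hstep n) as [H1 _]. lra. }
  assert (Hcau : cauchy (fun n => fst (seqp n))).
  { intros eps He. destruct (pow_lt_1_zero (/2) ltac:(rewrite Rabs_right; lra) eps He) as [N HN].
    exists N. intros m n Hm Hn0. cbv beta. destruct (Nat.le_ge_cases m n).
    - pose proof (Hnest m n H). pose proof (Hnest N m Hm). pose proof (Hpos n). pose proof (Hpos m).
      specialize (HN N (le_n _)). rewrite Rabs_right in HN by (apply Rle_ge, pow_le; lra).
      pose proof (Hrad N). rewrite vnorm_sub_sym. pose proof (vnorm_nonneg _ (vsub (fst (seqp m)) (fst (seqp N)))). lra.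
    - pose proof (Hnest n m H). pose proof (Hnest N n Hn0). pose proof (Hpos n). pose proof (Hpos m).
      specialize (HN N (le_n _)). rewrite Rabs_right in HN by (apply Rle_ge, pow_le; lra).
      pose proof (Hrad N). pose proof (vnorm_nonneg _ (vsub (fst (seqp n)) (fst (seqp N)))). lra. }
  destruct (cauchy_cv _ Hcau) as [cs Hcs].
  assert (Hclose : forall n, vnorm (vsub cs (fst (seqp n))) <= snd (seqp n)).
  { intro n. apply (seq_cv_dist_le (fun m => fst (seqp m)) cs _ _ n Hcs).
    intros m Hm. pose proof (Hnest n m Hm). pose proof (Hpos m). lra. }
  destruct (bounded_PP cs) as [k Hk].
  destruct (Hstep k) as [_ [_ H3]]. specialize (H3 cs Hk). specialize (Hclose (S k)).
  rewrite vnorm_sub_sym in H3. pose proof (Hpos (S k)). lra.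
Qed.

Lemma approx : exists C, 0 <= C /\ forall y eps, eps > 0 -> exists z, Eb (C * vnorm y) z /\ vnorm (vsub y z) < eps.
Proof.
  destruct baire as [k [x0 [r [Hr Hb]]]].
  assert (Hw : forall w, vnorm w < r -> clE (2 * INR k) w).
  { intros w Hw eps He.
    assert (H1 : clE (INR k) (vadd x0 w)). { apply Hb. rewrite vsub_add_l; auto. }
    assert (H2 : clE (INR k) x0). { apply Hb. rewrite vsub_diag, vnorm_zero; lra. }
    destruct (H1 (eps/2) ltac:(lra)) as [z1 [Hz1 Hd1]].
    destruct (H2 (eps/2) ltac:(lra)) as [z2 [Hz2 Hd2]].
    exists (vsub z1 z2). split. replace (2 * INR k) with (INR k + INR k) by ring. apply Eb_sub; auto.
    rewrite (vsub_vsub_same x0). eapply Rle_lt_trans; [apply vnorm_sub_le|]. lra. }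
  exists (4 * INR k / r). split. { apply Rmult_le_pos. pose proof (pos_INR k); lra. left; apply Rinv_0_lt_compat; lra. }
  intros y eps He.
  destruct (Req_dec (vnorm y) 0) as [Hy0|Hy0].
  { apply vnorm_eq0 in Hy0. subst y. exists vzero. split. rewrite vnorm_zero, Rmult_0_r; apply Eb_zero.
    rewrite vsub_diag, vnorm_zero; lra. }
  pose proof (vnorm_nonneg _ y) as Hyp.
  set (t := r / (2 * vnorm y)).
  assert (Ht : 0 < t). { unfold t. apply Rdiv_lt_0_compat; lra. }
  assert (Hwn : vnorm (sc t y) < r).
  { rewrite vnorm_sc, Rabs_right by lra. unfold t. field_simplify; lra. }
  destruct (Hw _ Hwn (eps * t)) as [z' [Hz' Hd]]. { apply Rmult_gt_0_compat; lra. }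
  exists (sc (/t) z'). split.
  - eapply Eb_mono; [|apply Eb_sc; eauto]. rewrite Rabs_right by (left; apply Rinv_0_lt_compat; lra).
    unfold t. right. field. split; lra.
  - replace y with (sc (/t) (sc t y)) at 1.
    2:{ rewrite sc_mul, Rinv_l by lra. apply sc_1. }
    rewrite <- sc_sub, vnorm_sc, Rabs_right by (left; apply Rinv_0_lt_compat; lra).
    apply Rmult_lt_reg_l with t; auto. rewrite <- Rmult_assoc, Rinv_r by lra. lra.
Qed.

Lemma triple_lim (w : nat -> X) wl eta :
  seq_cv w wl ->
  (forall eps, eps > 0 -> exists J, forall i j, (J <= i)%nat -> (J <= j)%nat -> forall N, vnorm (vsub (PP hD N (w i)) (PP hD N (w j))) <= eps) ->
  (forall j N, vnorm (PP hD N (w j)) <= eta) ->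
  forall N, vnorm (PP hD N wl) <= eta.
Proof.
  intros Hw Hc Hb.
  assert (Hz : forall N, exists zN, seq_cv (fun j => PP hD N (w j)) zN).
  { intro N. apply cauchy_cv. intros eps He. destruct (Hc (eps/2) ltac:(lra)) as [J HJ].
    exists J. intros m n Hm Hn. specialize (HJ m n Hm Hn N). lra. }
  destruct (choice_fun _ Hz) as [z Hzf].
  assert (Hzb : forall N, vnorm (z N) <= eta).
  { intro N. apply (seq_cv_norm_le _ _ _ O (Hzf N)). intros; apply Hb. }
  assert (Hunif : forall eps, eps > 0 -> exists J, forall j, (J <= j)%nat -> forall N, vnorm (vsub (PP hD N (w j)) (z N)) <= eps).
  { intros eps He. destruct (Hc eps He) as [J HJ]. exists J. intros j Hj N.
    rewrite vnorm_sub_sym. apply (seq_cv_dist_le (fun i => PP hD N (w i)) (z N) (PP hD N (w j)) eps J (Hzf N)).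
    intros i Hi. apply HJ; auto. }
  set (e := fun n => match n with O => z O | S m => vsub (z (S m)) (z m) end).
  assert (Hpe : forall N, psum e N = z N).
  { induction N. auto. simpl. rewrite IHN. rewrite vadd_comm. apply vadd_sub. }
  assert (Hexp : expansion D wl e).
  { split.
    - intro n. apply (D_closed hD n (fun j => ex hD (w j) n)). intro; apply ex_in.
      destruct n.
      + simpl. apply (Hzf O).
      + simpl. eapply seq_cv_ext; [|apply seq_cv_sub; [apply (Hzf (S n))|apply (Hzf n)]].
        intro j. simpl. apply ex_succ.
    - unfold series_cv. intros eps He.
      destruct (Hunif (eps/3) ltac:(lra)) as [J1 HJ1].
      destruct (Hw (eps/3) ltac:(lra)) as [J2 HJ2].
      set (j := max J1 J2).
      destruct (PP_cv hD (w j) (eps/3) ltac:(lra)) as [N0 HN0].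
      exists N0. intros N HN. rewrite Hpe. fold (vsub (z N) wl).
      specialize (HJ1 j ltac:(lia) N). specialize (HJ2 j ltac:(lia)). specialize (HN0 N HN).
      fold (vsub (w j) wl) in HJ2. fold (vsub (PP hD N (w j)) (w j)) in HN0.
      eapply Rle_lt_trans; [apply (vnorm_dist _ (PP hD N (w j)))|].
      eapply Rle_lt_trans; [apply Rplus_le_compat_l, (vnorm_dist _ (w j))|].
      rewrite vnorm_sub_sym in HJ1. lra. }
  intro N. unfold PP. rewrite (psum_ext (ex hD wl) e). rewrite Hpe; auto.
  intros k _. symmetry. apply (ex_uniq hD); auto.
Qed.

Lemma beta_exists : exists beta, 0 <= beta /\ forall N x, vnorm (PP hD N x) <= beta * vnorm x.
Proof.
  destruct approx as [C [HC Ha]].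
  exists (2 * C). split; [lra|]. intros Nfix x.
  destruct (Req_dec (vnorm x) 0) as [Hx0|Hx0].
  { apply vnorm_eq0 in Hx0. subst x. rewrite PP_zero, !vnorm_zero; lra. }
  pose proof (vnorm_nonneg _ x) as Hxp.
  assert (Hf : forall (p : nat * X), exists z, Eb (C * vnorm (snd p)) z /\ vnorm (vsub (snd p) z) < vnorm x * (/2)^(S (fst p))).
  { intros [j y]. apply Ha. simpl. apply Rmult_gt_0_compat. lra. apply Rmult_gt_0_compat; [lra|]. apply pow_lt; lra. }
  destruct (choice_fun _ Hf) as [g Hg].
  set (rr := fix rr (j : nat) : X := match j with O => x | S i => vsub (rr i) (g (i, rr i)) end).
  set (zz := fun j => g (j, rr j)).
  assert (Hr : forall j, vnorm (rr j) <= vnorm x * (/2)^j).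
  { destruct j. simpl; lra. simpl. destruct (Hg (j, rr j)) as [_ H]. simpl in H. lra. }
  assert (Hz : forall j, Eb (C * (vnorm x * (/2)^j)) (zz j)).
  { intro j. eapply Eb_mono; [|apply (Hg (j, rr j))]. simpl. apply Rmult_le_compat_l; auto. }
  assert (Hrec : forall j, rr (S j) = vsub (rr j) (zz j)). { intro; reflexivity. }
  set (w := fun j => vsub (rr 1%nat) (rr (S j))).
  assert (Hwb : forall j, Eb (C * vnorm x * (1 - (/2)^j)) (w j)).
  { induction j.
    - unfold w. rewrite vsub_diag. eapply Eb_mono; [|apply Eb_zero]. simpl; lra.
    - unfold w. rewrite (Hrec (S j)), vsub_sub_r. fold (w j).
      eapply Eb_mono; [|apply Eb_add; [apply IHj| apply Hz]]. simpl. right; field. }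
  assert (Hrcv : seq_cv (fun j => rr (S j)) vzero).
  { intros eps He. destruct (pow_lt_1_zero (/2) ltac:(rewrite Rabs_right; lra) (eps / vnorm x)) as [M HM].
    { apply Rdiv_lt_0_compat; lra. }
    exists M. intros n Hn. fold (vsub (rr (S n)) vzero). rewrite vsub_0r.
    specialize (HM (S n) ltac:(lia)). rewrite Rabs_right in HM by (apply Rle_ge, pow_le; lra).
    pose proof (Hr (S n)). apply Rmult_lt_compat_l with (r := vnorm x) in HM; [|lra].
    replace (vnorm x * (eps / vnorm x)) with eps in HM by (field; lra). lra. }
  assert (Hwcv : seq_cv w (rr 1%nat)).
  { pose proof (seq_cv_sub _ _ _ _ (seq_cv_const (rr 1%nat)) Hrcv) as H. rewrite vsub_0r in H. exact H. }
  assert (Hr1 : forall N, vnorm (PP hD N (rr 1%nat)) <= C * vnorm x).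
  { apply (triple_lim w); auto.
    - intros eps He. destruct (pow_lt_1_zero (/2) ltac:(rewrite Rabs_right; lra) (eps / (C * vnorm x + 1))) as [M HM].
      { apply Rdiv_lt_0_compat; [lra|]. pose proof (Rmult_le_pos C (vnorm x) HC Hxp). lra. }
      assert (Hij : forall i j, (i <= j)%nat -> Eb (C * vnorm x * ((/2)^i - (/2)^j)) (vsub (w j) (w i))).
      { intros i j Hij. induction Hij.
        - rewrite vsub_diag. eapply Eb_mono; [|apply Eb_zero]. lra.
        - unfold w at 1. rewrite (Hrec (S m)), vsub_sub_r. fold (w m). rewrite vsub_add_r.
          eapply Eb_mono; [|apply Eb_add; [apply IHHij| apply Hz]]. simpl. right; field. }
      assert (Hij' : forall i j, (M <= i)%nat -> (i <= j)%nat -> forall N, vnorm (PP hD N (vsub (w j) (w i))) <= eps).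
      { intros i j Hi Hle N. eapply Rle_trans; [apply (Hij i j Hle)|].
        specialize (HM i ltac:(lia)). rewrite Rabs_right in HM by (apply Rle_ge, pow_le; lra).
        pose proof (pow_le (/2) j ltac:(lra)).
        assert (HCx : 0 <= C * vnorm x) by (apply Rmult_le_pos; auto).
        apply Rle_trans with (C * vnorm x * (/2)^i). apply Rmult_le_compat_l; lra.
        apply Rmult_lt_compat_l with (r := C * vnorm x + 1) in HM; [|lra].
        replace ((C * vnorm x + 1) * (eps / (C * vnorm x + 1))) with eps in HM by (field; lra).
        pose proof (pow_le (/2) i ltac:(lra)). nra. }
      exists M. intros i j Hi Hj N.
      destruct (Nat.le_ge_cases i j).
      + rewrite vnorm_sub_sym, <- PP_sub. apply Hij'; auto.
      + rewrite <- PP_sub. apply Hij'; auto.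
    - intros j N. specialize (Hwb j N). pose proof (pow_le (/2) j ltac:(lra)).
      assert (C * vnorm x * (1 - (/2)^j) <= C * vnorm x). 
      { apply Rle_trans with (C * vnorm x * 1). apply Rmult_le_compat_l. apply Rmult_le_pos; auto. lra. lra. }
      lra. }
  assert (Hx : x = vadd (zz 0%nat) (rr 1%nat)).
  { rewrite (Hrec 0%nat). change (rr 0%nat) with x. rewrite vadd_comm, vadd_sub. auto. }
  rewrite Hx at 1. rewrite PP_add. eapply Rle_trans; [apply vnorm_triangle|].
  specialize (Hz 0%nat Nfix). simpl in Hz. specialize (Hr1 Nfix). lra.
Qed.

End Beta.
Arguments beta_exists {X D}.
Arguments choice_fun {A B}.

Fixpoint var (d : nat -> R) (M : nat) : R :=
  match M with O => 0 | S m => var d m + Rabs (d m - d (S m)) end.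

Lemma var_nonneg d M : 0 <= var d M.
Proof. induction M; simpl. lra. pose proof (Rabs_pos (d M - d (S M))). lra. Qed.

Lemma var_incr d M : (forall k, d k <= d (S k)) -> var d M = d M - d O.
Proof. intro H. induction M; simpl. lra. rewrite IHM. rewrite Rabs_left1. lra. specialize (H M); lra. Qed.
Lemma var_decr d M : (forall k, d (S k) <= d k) -> var d M = d O - d M.
Proof. intro H. induction M; simpl. lra. rewrite IHM. rewrite Rabs_right. lra. specialize (H M); lra. Qed.

Lemma var_pos_bound' d M : (forall k, 0 <= d k) -> var d M <= 2 * sum_f_R0 d M - d M.
Proof. intro H. induction M; simpl. specialize (H O); lra.
  assert (Rabs (d M - d (S M)) <= d M + d (S M)).
  { pose proof (H M); pose proof (H (S M)). apply Rabs_le; lra. }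
  pose proof (cond_pos_sum d M H). assert (d M <= sum_f_R0 d M) by (apply sum_term_le; auto).
  pose proof (H (S M)). lra. Qed.
Lemma var_pos_bound d M : (forall k, 0 <= d k) -> var d M <= 2 * sum_f_R0 d M.
Proof. intro H. pose proof (var_pos_bound' d M H). pose proof (H M). lra. Qed.

Lemma var_lin (d e : nat -> R) (a b : R) M : var (fun n => a * d n + b * e n) M <= Rabs a * var d M + Rabs b * var e M.
Proof. induction M; simpl. lra.
  replace (a * d M + b * e M - (a * d (S M) + b * e (S M))) with (a * (d M - d (S M)) + b * (e M - e (S M))) by ring.
  eapply Rle_trans; [apply Rplus_le_compat_l, Rabs_triang|]. rewrite !Rabs_mult. lra. Qed.

Definition BV (d : nat -> R) (V : R) := forall M, Rabs (d M) + var d M <= V.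

Lemma BV_abs d V k : BV d V -> Rabs (d k) <= V.
Proof. intro H. specialize (H k). pose proof (var_nonneg d k). lra. Qed.

Lemma BV_prod d e V W : BV d V -> BV e W -> BV (fun n => d n * e n) (3 * V * W).
Proof. intros Hd He M.
  assert (Hv : var (fun n => d n * e n) M <= V * var e M + W * var d M).
  { induction M; simpl. lra.
    replace (d M * e M - d (S M) * e (S M)) with (d M * (e M - e (S M)) + e (S M) * (d M - d (S M))) by ring.
    eapply Rle_trans; [apply Rplus_le_compat_l, Rabs_triang|]. rewrite !Rabs_mult.
    pose proof (BV_abs d V M Hd). pose proof (BV_abs e W (S M) He).
    pose proof (Rabs_pos (e M - e (S M))). pose proof (Rabs_pos (d M - d (S M))).
    pose proof (Rabs_pos (d M)). pose proof (Rabs_pos (e (S M))).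
    assert (Rabs (d M) * Rabs (e M - e (S M)) <= V * Rabs (e M - e (S M))) by (apply Rmult_le_compat_r; auto).
    assert (Rabs (e (S M)) * Rabs (d M - d (S M)) <= W * Rabs (d M - d (S M))) by (apply Rmult_le_compat_r; auto).
    lra. }
  rewrite Rabs_mult. pose proof (BV_abs d V M Hd). pose proof (BV_abs e W M He).
  pose proof (Hd M); pose proof (He M). pose proof (var_nonneg d M); pose proof (var_nonneg e M).
  pose proof (Rabs_pos (d M)). pose proof (Rabs_pos (e M)).
  assert (Rabs (d M) * Rabs (e M) <= V * W) by (apply Rmult_le_compat; auto).
  assert (V * var e M <= V * W) by (apply Rmult_le_compat_l; lra).
  assert (W * var d M <= W * V) by (apply Rmult_le_compat_l; lra). lra. Qed.

Lemma BV_mono01 d : (forall k, 0 <= d k <= 1) -> ((forall k, d k <= d (S k)) \/ (forall k, d (S k) <= d k)) -> BV d 2.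
Proof. intros H [Hm|Hm] M; [rewrite var_incr|rewrite var_decr]; auto; pose proof (H M); pose proof (H O);
  rewrite Rabs_right; lra. Qed.

Lemma BV_lin d e a b V W : BV d V -> BV e W -> BV (fun n => a * d n + b * e n) (Rabs a * V + Rabs b * W).
Proof. intros Hd He M. specialize (Hd M); specialize (He M). pose proof (var_lin d e a b M).
  pose proof (Rabs_triang (a * d M) (b * e M)). rewrite !Rabs_mult in H0.
  pose proof (Rabs_pos a); pose proof (Rabs_pos b).
  assert (Rabs a * (Rabs (d M) + var d M) <= Rabs a * V) by (apply Rmult_le_compat_l; auto).
  assert (Rabs b * (Rabs (e M) + var e M) <= Rabs b * W) by (apply Rmult_le_compat_l; auto).
  lra. Qed.

Section Abel.
Variable X : CBanach.

Definition abel_rest (d : nat -> R) (u : nat -> X) (M : nat) : X :=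
  match M with O => vzero | S m => psum (fun k => sc (d k - d (S k)) (psum u k)) m end.

Lemma abel_rest_S d (u : nat -> X) M : abel_rest d u (S M) = vadd (abel_rest d u M) (sc (d M - d (S M)) (psum u M)).
Proof. destruct M; simpl; auto. rewrite vadd_0; auto. Qed.

Lemma abel_alg (A B C R0 : X) : vadd (vadd A R0) C = vadd (vadd B C) (vadd R0 (vsub A B)).
Proof. rewrite (vadd_comm _ R0 (vsub A B)), vadd_assoc. rewrite (vadd_comm _ B C).
  rewrite <- (vadd_assoc _ C B), (vadd_comm _ B (vsub A B)), vadd_sub.
  rewrite (vadd_comm _ C A), <- !vadd_assoc, (vadd_comm _ R0 C); auto. Qed.

Lemma abel_id d (u : nat -> X) M : psum (fun n => sc (d n) (u n)) M = vadd (sc (d M) (psum u M)) (abel_rest d u M).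
Proof. induction M. simpl. rewrite vadd_0r; auto.
  change (psum (fun n => sc (d n) (u n)) (S M)) with (vadd (psum (fun n => sc (d n) (u n)) M) (sc (d (S M)) (u (S M)))).
  rewrite IHM, abel_rest_S. change (psum u (S M)) with (vadd (psum u M) (u (S M))).
  rewrite sc_addv, sc_subs. apply abel_alg. Qed.

Lemma abel_rest_bound d (u : nat -> X) M B : (forall k, (k <= M)%nat -> vnorm (psum u k) <= B) -> vnorm (abel_rest d u M) <= var d M * B.
Proof. intro H. induction M. simpl. rewrite vnorm_zero; lra.
  rewrite abel_rest_S. eapply Rle_trans; [apply vnorm_triangle|]. simpl.
  rewrite vnorm_sc. assert (0 <= B). { eapply Rle_trans; [apply vnorm_nonneg|apply (H O); lia]. }
  pose proof (Rabs_pos (d M - d (S M))).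
  assert (Rabs (d M - d (S M)) * vnorm (psum u M) <= Rabs (d M - d (S M)) * B) by (apply Rmult_le_compat_l; auto).
  assert (vnorm (abel_rest d u M) <= var d M * B) by (apply IHM; intros; apply H; lia). lra. Qed.

Lemma abel_bound d (u : nat -> X) M B : (forall k, (k <= M)%nat -> vnorm (psum u k) <= B) ->
  vnorm (psum (fun n => sc (d n) (u n)) M) <= (Rabs (d M) + var d M) * B.
Proof. intro H. rewrite abel_id. eapply Rle_trans; [apply vnorm_triangle|]. rewrite vnorm_sc.
  pose proof (abel_rest_bound d u M B H). specialize (H M (le_n _)).
  pose proof (Rabs_pos (d M)). assert (Rabs (d M) * vnorm (psum u M) <= Rabs (d M) * B) by (apply Rmult_le_compat_l; auto). lra. Qed.

Lemma psum_dist_le (v : nat -> X) (w : nat -> R) m M : (forall k, vnorm (v k) <= w k) -> (m <= M)%nat ->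
  vnorm (vsub (psum v M) (psum v m)) <= sum_f_R0 w M - sum_f_R0 w m.
Proof. intros H Hm. induction Hm. rewrite vsub_diag, vnorm_zero; lra.
  simpl. rewrite vsub_add_r. eapply Rle_trans; [apply vnorm_triangle|]. specialize (H (S m0)). lra. Qed.

End Abel.
Arguments abel_bound {X}. Arguments psum_dist_le {X}. Arguments abel_id {X}.

Section Mult.
Variable X : CBanach.
Variable D : nat -> X -> Prop.
Hypothesis hD : schauder_decomposition D.
Variable beta : R.
Hypothesis hb0 : 0 <= beta.
Hypothesis hbeta : forall N x, vnorm (PP hD N x) <= beta * vnorm x.

Local Notation exD := (ex hD).
Local Notation PD := (PP hD).

Lemma ex_bound x n : vnorm (exD x n) <= 2 * beta * vnorm x.
Proof. pose proof (vnorm_nonneg _ x). destruct n.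
  - change (exD x 0%nat) with (PD 0%nat x). pose proof (hbeta 0%nat x). nra.
  - rewrite <- (ex_succ hD). eapply Rle_trans; [apply vnorm_sub_le|]. pose proof (hbeta (S n) x); pose proof (hbeta n x); lra. Qed.

Lemma ex_tail x m n : exD (vsub x (PD m x)) n = if Nat.leb n m then vzero else exD x n.
Proof. rewrite (ex_sub hD), (ex_PP hD). destruct (Nat.leb n m). apply vsub_diag. apply vsub_0r. Qed.

Lemma mult_partial_bound d V x M : BV d V -> vnorm (psum (fun n => sc (d n) (exD x n)) M) <= V * (beta * vnorm x).
Proof. intro H. eapply Rle_trans; [apply abel_bound; intros; apply hbeta|].
  apply Rmult_le_compat_r; auto. apply Rmult_le_pos; auto; apply vnorm_nonneg. Qed.

Lemma mult_exists d V x : BV d V -> exists l, series_cv (fun n => sc (d n) (exD x n)) l.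
Proof.
  intro HV. apply cauchy_cv. intros eps He.
  assert (HV0 : 0 <= V). { specialize (HV O). simpl in HV. pose proof (Rabs_pos (d O)). lra. }
  destruct (PP_cv hD x (eps / (V * beta + 1))) as [N HN].
  { apply Rdiv_lt_0_compat; [lra|]. pose proof (Rmult_le_pos _ _ HV0 hb0). lra. }
  assert (Hk : forall m M, (N <= m)%nat -> (m <= M)%nat ->
     vnorm (vsub (psum (fun n => sc (d n) (exD x n)) M) (psum (fun n => sc (d n) (exD x n)) m)) < eps).
  { intros m M Hm HmM. set (z := vsub x (PD m x)).
    assert (E : vsub (psum (fun n => sc (d n) (exD x n)) M) (psum (fun n => sc (d n) (exD x n)) m)
               = psum (fun n => sc (d n) (exD z n)) M).
    { assert (E1 : psum (fun n => sc (d n) (exD x n)) m = psum (fun n => sc (d n) (exD (PD m x) n)) M).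
      { rewrite (psum_tail (fun n => sc (d n) (exD (PD m x) n)) m). 
        apply psum_ext. intros k Hk. rewrite (ex_PP hD). destruct (Nat.leb_spec k m); auto; lia.
        intros k Hk. rewrite (ex_PP hD). destruct (Nat.leb_spec k m); [lia|]. apply sc_zero. auto. }
      rewrite E1, <- psum_sub. apply psum_ext. intros k _. unfold z. rewrite (ex_sub hD), sc_sub; auto. }
    rewrite E. eapply Rle_lt_trans; [apply mult_partial_bound; eauto|].
    specialize (HN m Hm). fold (vsub (PD m x) x) in HN. rewrite vnorm_sub_sym in HN. fold z in HN.
    pose proof (vnorm_nonneg _ z). pose proof (Rmult_le_pos _ _ HV0 hb0).
    apply Rle_lt_trans with ((V * beta + 1) * vnorm z). rewrite <- Rmult_assoc. nra.
    apply Rmult_lt_compat_l with (r := V * beta + 1) in HN; [|lra].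
    replace ((V * beta + 1) * (eps / (V * beta + 1))) with eps in HN by (field; lra). lra. }
  exists N. intros m n Hm Hn. destruct (Nat.le_ge_cases m n).
  - rewrite vnorm_sub_sym. apply Hk; auto.
  - apply Hk; auto.
Qed.

Definition Mop (d : nat -> R) (x : X) : X :=
  match excluded_middle_informative (exists V, BV d V) with
  | left H => proj1_sig (constructive_indefinite_description _
        (mult_exists d (proj1_sig (constructive_indefinite_description _ H)) x
          (proj2_sig (constructive_indefinite_description _ H))))
  | right _ => vzero end.

Lemma Mop_spec d V x : BV d V -> series_cv (fun n => sc (d n) (exD x n)) (Mop d x).
Proof. intro H. unfold Mop. destruct excluded_middle_informative as [H'|H'].
  - destruct constructive_indefinite_description; auto.
  - exfalso; apply H'; eauto. Qed.

Lemma Mop_bound d V x : BV d V -> vnorm (Mop d x) <= V * beta * vnorm x.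
Proof. intro H. rewrite Rmult_assoc. apply (seq_cv_norm_le _ _ _ O (Mop_spec d V x H)). intros; apply mult_partial_bound; auto. Qed.

Lemma Mop_uniq d V x l : BV d V -> series_cv (fun n => sc (d n) (exD x n)) l -> Mop d x = l.
Proof. intros H Hl. apply (seq_cv_unique _ _ _ (Mop_spec d V x H) Hl). Qed.

Lemma Mop_add d V x y : BV d V -> Mop d (vadd x y) = vadd (Mop d x) (Mop d y).
Proof. intro H. apply (Mop_uniq d V); auto. eapply series_cv_ext; [|apply series_cv_add; apply (Mop_spec d V); auto].
  intro n. simpl. rewrite (ex_add hD), sc_addv; auto. Qed.

Lemma Mop_vscal d V a x : BV d V -> Mop d (vscal a x) = vscal a (Mop d x).
Proof. intro H. apply (Mop_uniq d V); auto. eapply series_cv_ext; [|apply series_cv_vscal; apply (Mop_spec d V); auto].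
  intro n. simpl. rewrite (ex_vscal hD), vscal_sc; auto. Qed.

Lemma Mop_sub d V x y : BV d V -> Mop d (vsub x y) = vsub (Mop d x) (Mop d y).
Proof. intro H. apply (Mop_uniq d V); auto. eapply series_cv_ext; [|apply series_cv_sub; apply (Mop_spec d V); auto].
  intro n. simpl. rewrite (ex_sub hD), sc_sub; auto. Qed.

Lemma Mop_lin d e a b V W x : BV d V -> BV e W ->
  Mop (fun n => a * d n + b * e n) x = vadd (sc a (Mop d x)) (sc b (Mop e x)).
Proof. intros Hd He. apply (Mop_uniq _ _ _ _ (BV_lin d e a b V W Hd He)).
  eapply series_cv_ext; [|apply series_cv_add; apply series_cv_vscal; [apply (Mop_spec d V x Hd)|apply (Mop_spec e W x He)]].
  intro n; simpl. fold (sc a (sc (d n) (exD x n))). fold (sc b (sc (e n) (exD x n))). rewrite !sc_mul, <- sc_add; auto. Qed.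

Lemma Mop_bounded_op d V : BV d V -> bounded_op (Mop d).
Proof. intro H. split; [|split].
  - intros; eapply Mop_add; eauto.
  - intros; eapply Mop_vscal; eauto.
  - exists (V * beta). intro; apply (Mop_bound d V); auto. Qed.

Lemma Mop_multiplier d V : BV d V -> multiplier D d (Mop d).
Proof. intro H. apply (multiplier_of hD). intro x. apply (Mop_spec d V); auto. Qed.

Lemma Mop_finite d V y b : BV d V -> (forall n, (b < n)%nat -> exD y n = vzero) ->
  Mop d y = psum (fun n => sc (d n) (exD y n)) b.
Proof. intros H Hy. apply (Mop_uniq d V); auto. apply series_cv_finite. intros k Hk. rewrite Hy; auto. apply sc_zero. Qed.

Lemma Mop_one x : Mop (fun _ => 1) x = x.
Proof. apply (Mop_uniq _ 2). apply BV_mono01. intros; lra. left; intros; lra.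
  eapply series_cv_ext; [|apply (ex_cv hD x)]. intro; simpl; rewrite sc_1; auto. Qed.

Lemma lin_cont (T : X -> X) K u l : (forall x y, T (vsub x y) = vsub (T x) (T y)) -> (forall x, vnorm (T x) <= K * vnorm x) ->
  seq_cv u l -> seq_cv (fun n => T (u n)) (T l).
Proof. intros Hl HK Hu eps He.
  assert (HK0 : 0 <= K + 1 -> True) by auto.
  destruct (Hu (eps / (Rabs K + 1))) as [N HN]. { apply Rdiv_lt_0_compat; [lra|]. pose proof (Rabs_pos K); lra. }
  exists N. intros n Hn. fold (vsub (T (u n)) (T l)). rewrite <- Hl.
  specialize (HN n Hn). fold (vsub (u n) l) in HN. eapply Rle_lt_trans; [apply HK|].
  pose proof (vnorm_nonneg _ (vsub (u n) l)). pose proof (Rabs_pos K). pose proof (RRle_abs K).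
  apply Rle_lt_trans with ((Rabs K + 1) * vnorm (vsub (u n) l)). nra.
  apply Rmult_lt_compat_l with (r := Rabs K + 1) in HN; [|lra].
  replace ((Rabs K + 1) * (eps / (Rabs K + 1))) with eps in HN by (field; lra). lra. Qed.

Lemma Mop_on_D d V k v : BV d V -> D k v -> Mop d v = sc (d k) v.
Proof. intros H Hv. rewrite (Mop_finite d V v k); auto.
  - rewrite (psum_ext _ (fun n => if Nat.eqb n k then sc (d k) v else vzero)).
    + destruct k. simpl; auto. simpl. rewrite Nat.eqb_refl. rewrite (psum_ext _ (fun _ => vzero)), psum_zero, vadd_0; auto.
      intros j Hj. destruct (Nat.eqb_spec j (S k)); auto; lia.
    + intros j _. rewrite (ex_D hD k v j Hv). destruct (Nat.eqb_spec j k); subst; auto. apply sc_zero.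
  - intros n Hn. rewrite (ex_D hD k v n Hv). destruct (Nat.eqb_spec n k); auto; lia. Qed.

Lemma Mop_psum d V (f : nat -> X) M : BV d V -> Mop d (psum f M) = psum (fun n => Mop d (f n)) M.
Proof. intro H. induction M; simpl; auto. rewrite (Mop_add d V), IHM; auto. Qed.

Lemma Mop_comp d e V W x : BV d V -> BV e W -> Mop d (Mop e x) = Mop (fun n => d n * e n) x.
Proof. intros Hd He. symmetry. apply (Mop_uniq _ (3 * V * W)).
  - apply BV_prod; auto.
  - unfold series_cv.
    eapply seq_cv_ext; [| apply (lin_cont (Mop d) (V * beta)); [intros; eapply Mop_sub; eauto| intro; apply (Mop_bound d V); auto | apply (Mop_spec e W x He)]].
    intro M. simpl. rewrite (Mop_psum d V) by auto. apply psum_ext. intros k _.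
    unfold sc at 1. rewrite (Mop_vscal d V) by auto. rewrite (Mop_on_D d V k) by (auto; apply ex_in).
    unfold sc. rewrite <- vscal_mul, Cmul_RtoC, Rmult_comm. auto. Qed.

End Mult.
Arguments ex_bound {X D}.
Arguments ex_tail {X D}.
Arguments mult_partial_bound {X D}.
Arguments mult_exists {X D}.
Arguments Mop {X D}.
Arguments Mop_spec {X D}.
Arguments Mop_bound {X D}.
Arguments Mop_uniq {X D}.
Arguments Mop_add {X D}.
Arguments Mop_vscal {X D}.
Arguments Mop_sub {X D}.
Arguments Mop_lin {X D}.
Arguments Mop_bounded_op {X D}.
Arguments Mop_multiplier {X D}.
Arguments Mop_finite {X D}.
Arguments Mop_one {X D}.
Arguments lin_cont {X}.
Arguments Mop_on_D {X D}.
Arguments Mop_psum {X D}.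
Arguments Mop_comp {X D}.

Section Rad.
Variable X : CBanach.

Lemma vadd_rcomm (a b c : X) : vadd (vadd a b) c = vadd (vadd a c) b.
Proof. rewrite <- !vadd_assoc, (vadd_comm _ b c); auto. Qed.

Lemma rad_ge_acc (acc : X) (xs : list X) : vnorm acc <= rad_aux X acc xs.
Proof. revert acc; induction xs as [|x xs IH]; intro acc; simpl. lra.
  pose proof (IH (vadd acc x)). pose proof (IH (vadd acc (vopp x))).
  pose proof (vnorm_triangle _ (vadd acc x) (vadd acc (vopp x))).
  assert (vadd (vadd acc x) (vadd acc (vopp x)) = sc 2 acc).
  { rewrite vadd_swap, vadd_opp, vadd_0r. replace 2 with (1+1) by ring. rewrite sc_add, sc_1; auto. }
  rewrite H2, vnorm_sc, Rabs_right in H1 by lra. lra. Qed.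

Lemma rad_nonneg (acc : X) (xs : list X) : 0 <= rad_aux X acc xs.
Proof. pose proof (rad_ge_acc acc xs). pose proof (vnorm_nonneg _ acc). lra. Qed.

Lemma rad_convex (acc x : X) (xs : list X) : rad_aux X acc xs <= (rad_aux X (vadd acc x) xs + rad_aux X (vadd acc (vopp x)) xs) / 2.
Proof. revert acc; induction xs as [|y ys IH]; intro acc; simpl.
  - pose proof (vnorm_triangle _ (vadd acc x) (vadd acc (vopp x))).
    assert (vadd (vadd acc x) (vadd acc (vopp x)) = sc 2 acc).
    { rewrite vadd_swap, vadd_opp, vadd_0r. replace 2 with (1+1) by ring. rewrite sc_add, sc_1; auto. }
    rewrite H0, vnorm_sc, Rabs_right in H by lra. lra.
  - pose proof (IH (vadd acc y)). pose proof (IH (vadd acc (vopp y))).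
    rewrite !(vadd_rcomm acc y), !(vadd_rcomm acc (vopp y)) in *. lra. Qed.

Lemma rad_ge_mem (acc : X) (xs : list X) x : In x xs -> (vnorm (vadd acc x) + vnorm (vadd acc (vopp x))) / 2 <= rad_aux X acc xs.
Proof. revert acc; induction xs as [|y ys IH]; intros acc Hin; simpl in *. contradiction.
  destruct Hin as [->|Hin].
  - pose proof (rad_ge_acc (vadd acc x) ys). pose proof (rad_ge_acc (vadd acc (vopp x)) ys). lra.
  - pose proof (IH (vadd acc y) Hin). pose proof (IH (vadd acc (vopp y)) Hin).
    rewrite !(vadd_rcomm acc y) in H. rewrite !(vadd_rcomm acc (vopp y)) in H0.
    pose proof (vnorm_triangle _ (vadd (vadd acc x) y) (vadd (vadd acc x) (vopp y))).
    pose proof (vnorm_triangle _ (vadd (vadd acc (vopp x)) y) (vadd (vadd acc (vopp x)) (vopp y))).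
    assert (forall a : X, vadd (vadd a y) (vadd a (vopp y)) = sc 2 a).
    { intro a. rewrite vadd_swap, vadd_opp, vadd_0r. replace 2 with (1+1) by ring. rewrite sc_add, sc_1; auto. }
    rewrite H3, vnorm_sc, Rabs_right in H1 by lra. rewrite H3, vnorm_sc, Rabs_right in H2 by lra. lra. Qed.

Lemma Rnorm_ge_mem (xs : list X) (x : X) : In x xs -> vnorm x <= Rnorm xs.
Proof. intro H. pose proof (rad_ge_mem vzero xs x H). rewrite !vadd_0, vnorm_opp in H0. unfold Rnorm. lra. Qed.

Lemma rad_zeroing (acc : X) (l : list (bool * X)) :
  rad_aux X acc (map (fun p : bool * X => if fst p then snd p else vzero) l) <= rad_aux X acc (map snd l).
Proof. revert acc; induction l as [|[b y] l IH]; intro acc; simpl. lra.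
  destruct b.
  - pose proof (IH (vadd acc y)). pose proof (IH (vadd acc (vopp y))). lra.
  - rewrite vopp_zero, vadd_0r. pose proof (IH acc). pose proof (rad_convex acc y (map snd l)). lra. Qed.

Lemma rad_tri_add (a b : X) (l : list (X * X)) :
  rad_aux X (vadd a b) (map (fun p : X * X => vadd (fst p) (snd p)) l) <= rad_aux X a (map fst l) + rad_aux X b (map snd l).
Proof. revert a b; induction l as [|[x y] l IH]; intros a b; simpl. apply vnorm_triangle.
  pose proof (IH (vadd a x) (vadd b y)). pose proof (IH (vadd a (vopp x)) (vadd b (vopp y))).
  rewrite vadd_swap in H. rewrite vadd_swap, <- vopp_add in H0. lra. Qed.

Lemma rad_tri_sub (a b : X) (l : list (X * X)) :
  rad_aux X (vsub a b) (map (fun p : X * X => vsub (fst p) (snd p)) l) <= rad_aux X a (map fst l) + rad_aux X b (map snd l).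
Proof. revert a b; induction l as [|[x y] l IH]; intros a b; simpl. apply vnorm_sub_le.
  pose proof (IH (vadd a x) (vadd b y)). pose proof (IH (vadd a (vopp x)) (vadd b (vopp y))).
  assert (E1 : vadd (vsub a b) (vsub x y) = vsub (vadd a x) (vadd b y)) by (symmetry; apply vsub_add).
  assert (E2 : vadd (vsub a b) (vopp (vsub x y)) = vsub (vadd a (vopp x)) (vadd b (vopp y))).
  { rewrite vsub_opp. unfold vsub. rewrite vopp_add, vopp_opp, (vadd_swap a (vopp x)). f_equal. apply vadd_comm. }
  rewrite E1, E2. lra. Qed.

Lemma rad_lin (T : X -> X) K (acc : X) (xs : list X) : 0 <= K ->
  (forall x y, T (vadd x y) = vadd (T x) (T y)) -> (forall x, T (vopp x) = vopp (T x)) -> (forall x, vnorm (T x) <= K * vnorm x) ->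
  rad_aux X (T acc) (map T xs) <= K * rad_aux X acc xs.
Proof. intros HK Ha Ho Hb. revert acc; induction xs as [|x xs IH]; intro acc; simpl. apply Hb.
  pose proof (IH (vadd acc x)). pose proof (IH (vadd acc (vopp x))). rewrite Ha in H. rewrite Ha, Ho in H0. lra. Qed.

Definition lsum (l : list X) : R := fold_right (fun x s => vnorm x + s) 0 l.

Lemma rad_le_sum (acc : X) (xs : list X) : rad_aux X acc xs <= vnorm acc + lsum xs.
Proof. revert acc; induction xs as [|x xs IH]; intro acc; simpl. lra.
  pose proof (IH (vadd acc x)). pose proof (IH (vadd acc (vopp x))).
  pose proof (vnorm_triangle _ acc x). pose proof (vnorm_triangle _ acc (vopp x)). rewrite vnorm_opp in H2. lra. Qed.

Lemma Rnorm_le_sum (xs : list X) : Rnorm xs <= lsum xs.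
Proof. unfold Rnorm. pose proof (rad_le_sum vzero xs). rewrite vnorm_zero in H. lra. Qed.

End Rad.
Arguments rad_nonneg {X}. Arguments Rnorm_ge_mem {X}. Arguments rad_zeroing {X}. Arguments rad_tri_add {X}.
Arguments rad_tri_sub {X}. Arguments rad_lin {X}. Arguments lsum {X}. Arguments Rnorm_le_sum {X}.
Arguments rad_convex {X}. Arguments rad_ge_acc {X}. Arguments rad_ge_mem {X}. Arguments rad_le_sum {X}. Arguments vadd_rcomm {X}.

Lemma sum_const_le (f : nat -> R) c m : (forall n, f n <= c) -> sum_f_R0 f m <= INR (S m) * c.
Proof. intro H. induction m. simpl. specialize (H O). lra. simpl sum_f_R0. rewrite (S_INR (S m)). specialize (H (S m)). lra. Qed.

Section Tail.
Variable X : CBanach.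
Variable D : nat -> X -> Prop.
Hypothesis hD : schauder_decomposition D.
Variable beta : R.
Hypothesis hb0 : 0 <= beta.
Hypothesis hbeta : forall N x, vnorm (PP hD N x) <= beta * vnorm x.
Hypothesis hnR : ~ R_schauder D.

Local Notation exD := (ex hD).
Local Notation PD := (PP hD).

Definition PPq (q : nat * X) : X := PD (fst q) (snd q).

Lemma fam_notR K : exists qs : list (nat * X), Rnorm (map PPq qs) > K * Rnorm (map snd qs).
Proof.
  apply NNPP; intro Hn. apply hnR. exists K. intros ps Hps.
  assert (exists qs, map PPq qs = map (fun p => fst p (snd p)) ps /\ map snd qs = map snd ps) as [qs [E1 E2]].
  { induction Hps as [|p ps Hp Hps IH].
    - exists nil; auto.
    - destruct IH as [qs [E1 E2]]. destruct Hp as [N HN].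
      exists ((N, snd p) :: qs). simpl. rewrite E1, E2. split; auto. f_equal.
      unfold PPq; simpl. rewrite (HN (snd p) (exD (snd p))); auto. apply ex_spec. }
  rewrite <- E1, <- E2. apply Rnot_lt_le. intro H. apply Hn. exists qs. lra.
Qed.

Lemma ex_opp x n : exD (vopp x) n = vopp (exD x n).
Proof. rewrite !vopp_sc. apply (ex_sc hD). Qed.
Lemma PP_opp N x : PD N (vopp x) = vopp (PD N x).
Proof. rewrite !vopp_sc. apply (PP_sc hD). Qed.

Lemma Rnorm_psum (g : nat * X -> nat -> X) qs m :
  Rnorm (map (fun q => psum (g q) m) qs) <= sum_f_R0 (fun n => Rnorm (map (fun q => g q n) qs)) m.
Proof. induction m; simpl. lra.
  pose proof (rad_tri_add vzero vzero (map (fun q => (psum (g q) m, g q (S m))) qs)).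
  rewrite vadd_0, !map_map in H. simpl in H. unfold Rnorm in *. lra. Qed.

Fixpoint mx (qs : list (nat * X)) : nat := match qs with nil => O | q :: r => Nat.max (fst q) (mx r) end.
Lemma mx_ge q qs : In q qs -> (fst q <= mx qs)%nat.
Proof. induction qs; simpl; intros H. contradiction. destruct H as [->|H]; [lia|]. specialize (IHqs H); lia. Qed.

Definition Wop (a b : nat) (x : X) : X := vsub (PD b x) (PD a x).

Lemma Wop_lin a b : (forall x y, Wop a b (vadd x y) = vadd (Wop a b x) (Wop a b y)) /\ (forall x, Wop a b (vopp x) = vopp (Wop a b x))
  /\ Wop a b vzero = vzero /\ (forall x, vnorm (Wop a b x) <= 2 * beta * vnorm x).
Proof. unfold Wop. split; [|split; [|split]].
  - intros. rewrite !(PP_add hD). apply vsub_add.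
  - intros. rewrite !PP_opp. unfold vsub. rewrite vopp_add; auto.
  - rewrite !(PP_zero hD). apply vsub_diag.
  - intros. eapply Rle_trans; [apply vnorm_sub_le|]. pose proof (hbeta b x). pose proof (hbeta a x). lra. Qed.

Lemma ex_Wop a b x n : (a <= b)%nat -> exD (Wop a b x) n = if andb (Nat.ltb a n) (Nat.leb n b) then exD x n else vzero.
Proof. intro Hab. unfold Wop. rewrite (ex_sub hD), !(ex_PP hD).
  destruct (Nat.leb_spec n b), (Nat.leb_spec n a), (Nat.ltb_spec a n); simpl; try lia.
  apply vsub_diag. apply vsub_0r. apply vsub_diag. Qed.

Lemma block_fam a L : 0 <= L -> exists b (ys : list (nat * X)), (a < b)%nat /\
  (forall y, In y ys -> forall n, (n <= a \/ b < n)%nat -> exD (snd y) n = vzero) /\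
  Rnorm (map PPq ys) > L * Rnorm (map snd ys).
Proof.
  intro HL.
  destruct (fam_notR (L * (2 * beta) + INR (S a) * (2 * beta))) as [qs Hqs].
  set (b := S (a + mx qs)).
  exists b, (map (fun q => (fst q, Wop a b (snd q))) qs).
  destruct (Wop_lin a b) as [Wa [Wo [W0 Wn]]].
  split; [unfold b; lia|]. split.
  { intros y Hy n Hn. apply in_map_iff in Hy as [q [<- Hq]]. simpl. rewrite ex_Wop by (unfold b; lia).
    destruct (Nat.ltb_spec a n), (Nat.leb_spec n b); simpl; auto; lia. }
  rewrite !map_map. simpl.
  assert (Hdec : forall q, In q qs -> PPq q = vadd (psum (fun n => if Nat.leb n (fst q) then exD (snd q) n else vzero) a) (PD (fst q) (Wop a b (snd q)))).
  { intros q Hq. unfold PPq, Wop. pose proof (mx_ge q qs Hq).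
    rewrite (PP_sub hD), !(PP_PP hD). rewrite (Nat.min_l (fst q) b) by (unfold b; lia).
    assert (E : psum (fun n => if Nat.leb n (fst q) then exD (snd q) n else vzero) a = PD (Nat.min (fst q) a) (snd q)).
    { rewrite Nat.min_comm, <- (PP_PP hD). unfold PP at 1. apply psum_ext. intros. rewrite (ex_PP hD); auto. }
    rewrite E. rewrite vadd_comm, vadd_sub. auto. }
  assert (H1 : Rnorm (map PPq qs) <= Rnorm (map (fun q => psum (fun n => if Nat.leb n (fst q) then exD (snd q) n else vzero) a) qs)
                 + Rnorm (map (fun q => PD (fst q) (Wop a b (snd q))) qs)).
  { pose proof (rad_tri_add vzero vzero (map (fun q => (psum (fun n => if Nat.leb n (fst q) then exD (snd q) n else vzero) a, PD (fst q) (Wop a b (snd q)))) qs)).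
    rewrite vadd_0, !map_map in H. simpl in H. unfold Rnorm.
    replace (map PPq qs) with (map (fun x => vadd (psum (fun n => if Nat.leb n (fst x) then exD (snd x) n else vzero) a) (PD (fst x) (Wop a b (snd x)))) qs); auto.
    apply map_ext_in. intros q Hq. rewrite Hdec; auto. }
  assert (H2 : Rnorm (map (fun q => psum (fun n => if Nat.leb n (fst q) then exD (snd q) n else vzero) a) qs) <= INR (S a) * (2 * beta) * Rnorm (map snd qs)).
  { eapply Rle_trans; [apply (Rnorm_psum (fun q n => if Nat.leb n (fst q) then exD (snd q) n else vzero))|].
    assert (Hterm : forall n, Rnorm (map (fun q => if Nat.leb n (fst q) then exD (snd q) n else vzero) qs) <= 2 * beta * Rnorm (map snd qs)).
    { intro n. pose proof (rad_zeroing vzero (map (fun q => (Nat.leb n (fst q), exD (snd q) n)) qs)).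
      rewrite !map_map in H. simpl in H. unfold Rnorm. eapply Rle_trans; [apply H|].
      pose proof (rad_lin (fun x => exD x n) (2 * beta) vzero (map snd qs) ltac:(lra)).
      rewrite map_map, (ex_zero hD) in H0. apply H0.
      - intros; apply (ex_add hD).
      - intros; apply ex_opp.
      - intros; apply (ex_bound hD beta hb0 hbeta). }
    rewrite Rmult_assoc. apply sum_const_le. intro; apply Hterm. }
  assert (H3 : Rnorm (map (fun q => Wop a b (snd q)) qs) <= 2 * beta * Rnorm (map snd qs)).
  { pose proof (rad_lin (Wop a b) (2 * beta) vzero (map snd qs) ltac:(lra) Wa Wo Wn).
    rewrite map_map, W0 in H. apply H. }
  pose proof (rad_nonneg vzero (map (fun q => Wop a b (snd q)) qs)).
  assert (L * Rnorm (map (fun q => Wop a b (snd q)) qs) <= L * (2 * beta * Rnorm (map snd qs))) by (apply Rmult_le_compat_l; auto).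
  unfold PPq at 1. simpl. lra.
Qed.

End Tail.
Arguments block_fam {X D}. Arguments PPq {X D}. Arguments ex_opp {X D}. Arguments PP_opp {X D}.

Lemma exp_pow_nat x m : exp x ^ m = exp (INR m * x).
Proof. induction m. simpl. rewrite Rmult_0_l, exp_0; auto.
  rewrite S_INR. simpl pow. rewrite IHm. rewrite <- exp_plus. f_equal. ring. Qed.

Lemma exp_ge_1px y : 1 + y <= exp y. Proof. apply exp_ineq1_le. Qed.

Lemma one_minus_exp y : 0 <= y -> 0 <= 1 - exp (- y) <= y.
Proof. intro H. pose proof (exp_ge_1px (-y)). split; [|lra].
  assert (exp (-y) <= 1). { rewrite <- exp_0. destruct H. left; apply exp_increasing; lra. subst; rewrite Ropp_0; lra. }
  lra. Qed.

Lemma exp_neg_inv y : exp (- y) = / exp y.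
Proof. apply exp_Ropp. Qed.

Lemma ineq1 y : 0 <= y -> y * exp (- y) <= 2 * (1 - exp (- y)).
Proof. intro H. rewrite exp_neg_inv. pose proof (exp_pos y). pose proof (exp_ge_1px y).
  apply Rmult_le_reg_r with (exp y); auto. field_simplify; [lra|lra|lra]. Qed.

Lemma ineq2 y : 0 <= y -> y * exp (- y) + 2 * (1 - exp (- (y/2))) <= 2 * (1 - exp (- y)).
Proof. intro H. set (u := exp (- (y/2))).
  assert (Hu : exp (- y) = u * u). { unfold u. rewrite <- exp_plus. f_equal. field. }
  rewrite Hu. assert (Hu0 : 0 < u) by apply exp_pos.
  assert (Hu1 : u * (1 + y/2) <= 1).
  { unfold u. rewrite exp_neg_inv. pose proof (exp_pos (y/2)). pose proof (exp_ge_1px (y/2)).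
    apply Rmult_le_reg_r with (exp (y/2)); auto. field_simplify; lra. }
  nra. Qed.

Lemma sum_xe (x : nat -> R) M : (forall k, 0 <= x k) -> (forall k, x (S k) <= x k / 2) ->
  sum_f_R0 (fun k => x k * exp (- x k)) M <= 2 * (1 - exp (- x O)).
Proof. revert x; induction M; intros x H0 H1. simpl. apply ineq1; auto.
  rewrite decomp_sum by lia. simpl pred.
  pose proof (IHM (fun k => x (S k)) (fun k => H0 (S k)) (fun k => H1 (S k))). simpl in H.
  assert (exp (- (x O / 2)) <= exp (- x 1%nat)).
  { destruct (Req_dec (x 1%nat) (x O / 2)) as [E|E]. rewrite E; lra.
    left. apply exp_increasing. specialize (H1 O). lra. }
  pose proof (ineq2 (x O) (H0 O)). lra. Qed.

Lemma exp_series x : Un_cv (sum_f_R0 (fun i => / INR (fact i) * x ^ i)) (exp x).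
Proof. unfold exp. destruct (exist_exp x) as [l Hl]. simpl. exact Hl. Qed.

Lemma exp_neg_nat_le (L : nat) : exp (- INR L) <= / (1 + INR L).
Proof. rewrite exp_neg_inv. pose proof (pos_INR L). pose proof (exp_ge_1px (INR L)).
  apply Rinv_le_contravar; lra. Qed.

Section Main.
Variable X : CBanach.
Variable D : nat -> X -> Prop.
Hypothesis hD : schauder_decomposition D.
Variable beta : R.
Hypothesis hb0 : 0 <= beta.
Hypothesis hbeta : forall N x, vnorm (PP hD N x) <= beta * vnorm x.
Hypothesis hnR : ~ R_schauder D.

Local Notation exD := (ex hD).
Local Notation PD := (PP hD).

Definition dl (b : nat) (ys : list (nat * X)) : R := / (INR (S b) * (2 * beta + 1) * (INR (length ys) + 1)).

Lemma dl_pos b ys : 0 < dl b ys.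
Proof. unfold dl. apply Rinv_0_lt_compat. pose proof (pos_INR (length ys)).
  apply Rmult_lt_0_compat; [apply Rmult_lt_0_compat|]; try lra. apply lt_0_INR; lia. Qed.

Definition Pstep (a b G : nat) : Prop :=
  (a < b)%nat /\ (2 <= G)%nat /\ exists ys : list (nat * X),
    (forall y, In y ys -> forall n, (n <= a \/ b < n)%nat -> exD (snd y) n = vzero) /\
    Rnorm (map (PPq hD) ys) > INR a * Rnorm (map snd ys) /\
    exists L : nat, exp (- INR L) <= dl b ys /\ INR L / dl b ys <= INR G.

Lemma step_ex a : exists bG : nat * nat, Pstep a (fst bG) (snd bG).
Proof.
  destruct (block_fam hD beta hb0 hbeta hnR a (INR a) (pos_INR a)) as [b [ys [Hab [Hsupp Hr]]]].
  pose proof (dl_pos b ys) as Hd.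
  destruct (INR_unbounded (/ dl b ys)) as [L HL].
  destruct (INR_unbounded (INR L / dl b ys + 2)) as [G HG].
  exists (b, G). simpl. split; auto. split.
  { destruct (le_lt_dec 2 G); auto. assert (INR G <= INR 1) by (apply le_INR; lia). simpl in H.
    pose proof (pos_INR L). assert (0 <= INR L / dl b ys) by (unfold Rdiv; apply Rmult_le_pos; [lra|left; apply Rinv_0_lt_compat; lra]). lra. }
  exists ys. split; auto. split; auto. exists L. split.
  - eapply Rle_trans; [apply exp_neg_nat_le|]. rewrite <- (Rinv_inv (dl b ys)).
    apply Rinv_le_contravar. apply Rinv_0_lt_compat; auto. lra.
  - lra.
Qed.

Definition bf (a : nat) : nat * nat := proj1_sig (constructive_indefinite_description _ (step_ex a)).
Definition bb a := fst (bf a).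
Definition GG a := snd (bf a).
Lemma bf_spec a : Pstep a (bb a) (GG a).
Proof. unfold bb, GG, bf. destruct constructive_indefinite_description; auto. Qed.

Fixpoint st (n : nat) : nat * nat :=
  match n with
  | O => (O, 1%nat)
  | S m => let p := st m in if Nat.leb (S m) (bb (fst p)) then (fst p, (GG (fst p) * snd p)%nat) else (m, (GG m * snd p)%nat)
  end.

Lemma st_S n : st (S n) = if Nat.leb (S n) (bb (fst (st n))) then (fst (st n), (GG (fst (st n)) * snd (st n))%nat) else (n, (GG n * snd (st n))%nat).
Proof. reflexivity. Qed.

Definition aa n := fst (st n).
Definition KK n := snd (st n).

Lemma KK_S n : KK (S n) = (GG (aa (S n)) * KK n)%nat.
Proof. unfold KK, aa. rewrite st_S. destruct (Nat.leb (S n) (bb (fst (st n)))); simpl; auto. Qed.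

Lemma GG_ge a : (2 <= GG a)%nat. Proof. apply (bf_spec a). Qed.
Lemma bb_gt a : (a < bb a)%nat. Proof. apply (bf_spec a). Qed.

Lemma KK_pos n : (1 <= KK n)%nat.
Proof. induction n. unfold KK; simpl; lia. rewrite KK_S. pose proof (GG_ge (aa (S n))). nia. Qed.

Lemma KK_mono n : (KK n <= KK (S n))%nat.
Proof. rewrite KK_S. pose proof (GG_ge (aa (S n))). nia. Qed.
Lemma KK_double n : (2 * KK n <= KK (S n))%nat.
Proof. rewrite KK_S. pose proof (GG_ge (aa (S n))). nia. Qed.
Lemma KK_mono_le n m : (n <= m)%nat -> (KK n <= KK m)%nat.
Proof. induction 1. lia. pose proof (KK_mono m). lia. Qed.

Fixpoint ss (j : nat) : nat := match j with O => O | S i => bb (ss i) end.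

Lemma ss_S j : ss (S j) = bb (ss j). Proof. reflexivity. Qed.
Lemma ss_mono i j : (i < j)%nat -> (ss i < ss j)%nat.
Proof. induction 1; rewrite ss_S; pose proof (bb_gt (ss i)); try pose proof (bb_gt (ss m)); lia. Qed.
Lemma ss_ge j : (j <= ss j)%nat.
Proof. induction j. simpl; lia. rewrite ss_S. pose proof (bb_gt (ss j)). lia. Qed.

Lemma aa_block n : (1 <= n)%nat -> exists j, (ss j < n <= ss (S j))%nat /\ aa n = ss j.
Proof.
  induction n; intro Hn. lia.
  destruct n.
  - exists O. unfold aa. rewrite st_S. pose proof (bb_gt 0). replace (Nat.leb 1 (bb (fst (st 0)))) with true by (symmetry; apply Nat.leb_le; simpl; lia). simpl. split; [lia|auto].
  - destruct (IHn ltac:(lia)) as [j [[H1 H2] H3]].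
    unfold aa in *. rewrite st_S. rewrite H3. rewrite ss_S in H2. destruct (Nat.leb_spec (S (S n)) (bb (ss j))); simpl.
    + exists j. simpl. split; [lia|auto].
    + exists (S j). assert (E : S n = bb (ss j)) by lia. simpl. rewrite <- E. pose proof (bb_gt (S n)). split; [lia|auto].
Qed.

Lemma aa_in_block j n : (ss j < n <= ss (S j))%nat -> aa n = ss j.
Proof. intro H. destruct (aa_block n ltac:(lia)) as [j' [H' E]]. rewrite E. f_equal.
  destruct (lt_eq_lt_dec j j') as [[Hl|Hl]|Hl]; auto.
  - assert (S j <= j')%nat by lia. destruct (Nat.eq_dec (S j) j'). subst. lia.
    pose proof (ss_mono (S j) j' ltac:(lia)). lia.
  - assert (S j' <= j)%nat by lia. destruct (Nat.eq_dec (S j') j). subst. lia.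
    pose proof (ss_mono (S j') j ltac:(lia)). lia.
Qed.

Lemma KK_in_block j n : (ss j < n <= ss (S j))%nat -> exists m, n = S m /\ KK n = (GG (ss j) * KK m)%nat.
Proof. intro H. destruct n. lia. exists n. split; auto. rewrite KK_S, (aa_in_block j (S n) H). auto. Qed.

Definition Kr n := INR (KK n).
Lemma Kr_ge1 n : 1 <= Kr n.
Proof. unfold Kr. pose proof (KK_pos n). apply le_INR in H. simpl in H. lra. Qed.
Lemma Kr_mono n m : (n <= m)%nat -> Kr n <= Kr m.
Proof. intro H; unfold Kr; apply le_INR, KK_mono_le; auto. Qed.
Lemma Kr_double n : 2 * Kr n <= Kr (S n).
Proof. unfold Kr. pose proof (KK_double n). apply le_INR in H. rewrite mult_INR in H. simpl in H. lra. Qed.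

Lemma coef_bound j n N L delta :
  let a := ss j in let b := ss (S j) in
  (a < n <= b)%nat -> exp (- INR L) <= delta -> INR L / delta <= INR (GG a) -> 0 < delta ->
  Rabs ((1 - (if Nat.leb n N then 1 else 0)) - exp (- INR (L * KK (Nat.min N b)) / Kr n)) <= delta.
Proof.
  intros a b Hn HL1 HL2 Hd.
  assert (HKn := Kr_ge1 n).
  rewrite mult_INR. fold (Kr (Nat.min N b)).
  destruct (Nat.leb_spec n N).
  - assert (Kr n <= Kr (Nat.min N b)) by (apply Kr_mono; lia).
    assert (INR L <= INR L * Kr (Nat.min N b) / Kr n).
    { apply Rmult_le_reg_r with (Kr n); [lra|]. unfold Rdiv. rewrite Rmult_assoc, Rinv_l, Rmult_1_r by lra.
      apply Rmult_le_compat_l; auto. apply pos_INR. }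
    assert (exp (- (INR L * Kr (Nat.min N b)) / Kr n) <= exp (- INR L)).
    { replace (- (INR L * Kr (Nat.min N b)) / Kr n) with (- (INR L * Kr (Nat.min N b) / Kr n)) by (field; lra).
      destruct (Req_dec (INR L) (INR L * Kr (Nat.min N b) / Kr n)) as [E|E]. rewrite <- E; lra.
      left; apply exp_increasing; lra. }
    pose proof (exp_pos (- (INR L * Kr (Nat.min N b)) / Kr n)).
    rewrite Rabs_left1 by lra. lra.
  - rewrite Nat.min_l by (unfold b; lia).
    destruct (KK_in_block j n Hn) as [m [Em HKm]]. subst n.
    assert (HKN : Kr N <= Kr m) by (apply Kr_mono; lia).
    assert (HKe : Kr (S m) = INR (GG a) * Kr m) by (unfold Kr; rewrite HKm, mult_INR; auto).
    assert (HG : 2 <= INR (GG a)) by (pose proof (GG_ge a); apply le_INR in H0; simpl in H0; lra).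
    assert (Hm1 := Kr_ge1 m). assert (HN1 := Kr_ge1 N). pose proof (pos_INR L).
    set (y := INR L * Kr N / Kr (S m)).
    assert (Hy0 : 0 <= y). { unfold y. apply Rmult_le_pos; [apply Rmult_le_pos; lra|]. left; apply Rinv_0_lt_compat; lra. }
    assert (Hyd : y <= delta).
    { unfold y. rewrite HKe.
      assert (INR L <= delta * INR (GG a)).
      { replace (INR L) with (INR L / delta * delta) by (field; lra). nra. }
      apply Rmult_le_reg_r with (INR (GG a) * Kr m). nra.
      unfold Rdiv. rewrite Rmult_assoc, Rinv_l by nra. rewrite Rmult_1_r. nra. }
    replace (- (INR L * Kr N) / Kr (S m)) with (- y) by (unfold y; field; lra).
    pose proof (one_minus_exp y Hy0). rewrite Rabs_right; lra.
Qed.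

Lemma sc_if (c : bool) (v : X) : sc (if c then 1 else 0) v = if c then v else vzero.
Proof. destruct c. apply sc_1. apply sc_0. Qed.

Lemma PP_fin_sc y a b N : (forall n, (n <= a \/ b < n)%nat -> exD y n = vzero) ->
  PD N y = psum (fun n => sc (if Nat.leb n N then 1 else 0) (exD y n)) b.
Proof. intro Hs. unfold PP. destruct (Nat.le_gt_cases N b).
  - rewrite (psum_tail _ N) with (n := b); auto.
    + apply psum_ext. intros k Hk. rewrite sc_if. destruct (Nat.leb_spec k N); auto; lia.
    + intros k Hk. rewrite sc_if. destruct (Nat.leb_spec k N); auto; lia.
  - rewrite (psum_tail (exD y) b) with (n := N); [|intros; apply Hs; lia|lia].
    apply psum_ext. intros k Hk. rewrite sc_if. destruct (Nat.leb_spec k N); auto; lia.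
Qed.

Lemma y_fin_sc y b : (forall n, (b < n)%nat -> exD y n = vzero) -> y = psum (fun n => sc 1 (exD y n)) b.
Proof. intro Hs. rewrite <- (PP_finite hD y b) at 1 by auto. unfold PP. apply psum_ext. intros; rewrite sc_1; auto. Qed.

Lemma lsum_bound (l : list (nat * X)) (f : nat * X -> X) C :
  (forall y, In y l -> vnorm (f y) <= C * vnorm (snd y)) -> 0 <= C ->
  lsum (map f l) <= INR (length l) * C * Rnorm (map snd l).
Proof. intros H HC. induction l as [|y l IH]. simpl. lra.
  change (lsum (map f (y :: l))) with (vnorm (f y) + lsum (map f l)). change (length (y::l)) with (S (length l)).
  change (map snd (y::l)) with (snd y :: map snd l).
  assert (vnorm (snd y) <= Rnorm (snd y :: map snd l)) by (apply Rnorm_ge_mem; simpl; auto).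
  assert (Rnorm (map snd l) <= Rnorm (snd y :: map snd l)).
  { unfold Rnorm. simpl. pose proof (rad_convex vzero (snd y) (map snd l)). lra. }
  rewrite S_INR. pose proof (H y (or_introl eq_refl)).
  assert (lsum (map f l) <= INR (length l) * C * Rnorm (map snd l)) by (apply IH; intros; apply H; simpl; auto).
  pose proof (pos_INR (length l)).
  assert (INR (length l) * C * Rnorm (map snd l) <= INR (length l) * C * Rnorm (snd y :: map snd l)).
  { apply Rmult_le_compat_l; auto. apply Rmult_le_pos; auto. }
  assert (C * vnorm (snd y) <= C * Rnorm (snd y :: map snd l)) by (apply Rmult_le_compat_l; auto).
  lra. Qed.

Lemma core (Fset : (X -> X) -> Prop) (Gf : nat -> X -> X) :
  (forall m, Fset (Gf m)) ->
  (forall m y b, (forall n, (b < n)%nat -> exD y n = vzero) -> Gf m y = psum (fun n => sc (exp (- INR m / Kr n)) (exD y n)) b) ->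
  ~ R_bounded Fset.
Proof.
  intros HF HG [Kb HK].
  destruct (INR_unbounded (Kb + 2)) as [j Hj].
  set (a := ss j). set (b := bb a).
  destruct (bf_spec a) as [Hab [HG2 [ys [Hsupp [Hr [L [HL1 HL2]]]]]]].
  fold b in Hab, Hsupp, HL1, HL2.
  set (delta := dl b ys). pose proof (dl_pos b ys) as Hd. fold delta in Hd, HL1, HL2.
  set (mfun := fun N => (L * KK (Nat.min N b))%nat).
  set (Gy := fun y : nat * X => Gf (mfun (fst y)) (snd y)).
  set (ey := fun y : nat * X => vsub (vsub (snd y) (PPq hD y)) (Gy y)).
  assert (HK1 : Rnorm (map Gy ys) <= Kb * Rnorm (map snd ys)).
  { pose proof (HK (map (fun y => (Gf (mfun (fst y)), snd y)) ys)). rewrite !map_map in H. simpl in H. apply H.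
    apply Forall_forall. intros p Hp. apply in_map_iff in Hp as [y [<- _]]. apply HF. }
  assert (Hey : forall y, In y ys -> vnorm (ey y) <= (INR (S b) * delta * (2 * beta)) * vnorm (snd y)).
  { intros y Hy. specialize (Hsupp y Hy).
    assert (Hs2 : forall n, (b < n)%nat -> exD (snd y) n = vzero) by (intros; apply Hsupp; lia).
    assert (E : ey y = psum (fun n => sc ((1 - (if Nat.leb n (fst y) then 1 else 0)) - exp (- INR (mfun (fst y)) / Kr n)) (exD (snd y) n)) b).
    { unfold ey, Gy, PPq. rewrite (HG _ _ b Hs2), (PP_fin_sc (snd y) a b (fst y) Hsupp).
      rewrite (y_fin_sc (snd y) b Hs2) at 1. rewrite <- !psum_sub. apply psum_ext. intros k _. rewrite !sc_subs. auto. }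
    rewrite E. eapply Rle_trans; [apply psum_norm|].
    replace (INR (S b) * delta * (2 * beta) * vnorm (snd y)) with (INR (S b) * (delta * (2 * beta * vnorm (snd y)))) by ring.
    apply sum_const_le. intro n. rewrite vnorm_sc.
    destruct (le_lt_dec n a).
    - rewrite Hsupp by lia. rewrite vnorm_zero, Rmult_0_r. pose proof (vnorm_nonneg _ (snd y)).
      apply Rmult_le_pos; [lra|]. apply Rmult_le_pos; lra.
    - destruct (le_lt_dec n b).
      + apply Rmult_le_compat. apply Rabs_pos. apply vnorm_nonneg.
        unfold mfun. apply (coef_bound j n (fst y) L delta); auto. try (unfold a, b in *; simpl; lia).
        apply (ex_bound hD beta hb0 hbeta).
      + rewrite Hs2 by lia. rewrite vnorm_zero, Rmult_0_r. pose proof (vnorm_nonneg _ (snd y)).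
        apply Rmult_le_pos; [lra|]. apply Rmult_le_pos; lra. }
  assert (Hsum : lsum (map ey ys) <= Rnorm (map snd ys)).
  { eapply Rle_trans; [apply (lsum_bound ys ey _ Hey)|].
    { apply Rmult_le_pos; [apply Rmult_le_pos|]; try lra. apply pos_INR. }
    pose proof (rad_nonneg vzero (map snd ys)). fold (Rnorm (map snd ys)) in H.
    assert (INR (length ys) * (INR (S b) * delta * (2 * beta)) <= 1).
    { unfold delta, dl. pose proof (pos_INR (length ys)). assert (0 < INR (S b)) by (apply lt_0_INR; lia).
      apply Rmult_le_reg_r with (INR (S b) * (2 * beta + 1) * (INR (length ys) + 1)).
      apply Rmult_lt_0_compat; [apply Rmult_lt_0_compat|]; lra.
      field_simplify; try lra. assert (0 <= INR (length ys) * INR (S b)) by (apply Rmult_le_pos; lra). assert (0 <= INR (S b) * beta) by (apply Rmult_le_pos; lra). lra. }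
    nra. }
  assert (Hdec : map (PPq hD) ys = map (fun y => vsub (vsub (snd y) (Gy y)) (ey y)) ys).
  { apply map_ext. intro y. unfold ey. set (p := PPq hD y). set (g := Gy y). set (z := snd y).
    rewrite (vsub_comm2 z p g), vsub_sub_r, vsub_diag, vadd_0. auto. }
  assert (Htri : Rnorm (map (PPq hD) ys) <= Rnorm (map snd ys) + Rnorm (map Gy ys) + lsum (map ey ys)).
  { rewrite Hdec. unfold Rnorm.
    pose proof (rad_tri_sub vzero vzero (map (fun y => (vsub (snd y) (Gy y), ey y)) ys)).
    rewrite vsub_diag, !map_map in H. simpl in H.
    pose proof (rad_tri_sub vzero vzero (map (fun y => (snd y, Gy y)) ys)).
    rewrite vsub_diag, !map_map in H0. simpl in H0.
    pose proof (Rnorm_le_sum (map ey ys)). unfold Rnorm in H1. change (map (fun x : nat * X => ey x) ys) with (map ey ys) in H. change (map (fun x : nat * X => snd x) ys) with (map (@snd nat X) ys) in H0. change (map (fun x : nat * X => Gy x) ys) with (map Gy ys) in H0. lra. }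
  pose proof (rad_nonneg vzero (map snd ys)) as HR. fold (Rnorm (map snd ys)) in HR.
  assert (INR j <= INR a) by (apply le_INR, ss_ge).
  assert ((Kb + 2) * Rnorm (map snd ys) <= INR a * Rnorm (map snd ys)) by (apply Rmult_le_compat_r; lra).
  lra.
Qed.

Local Notation MM := (Mop hD beta hb0 hbeta).

Definition ic n := / Kr n.
Definition cc n := exp (- ic n).

Lemma ic_bounds n : 0 < ic n <= 1.
Proof. unfold ic. pose proof (Kr_ge1 n). split. apply Rinv_0_lt_compat; lra.
  rewrite <- Rinv_1. apply Rinv_le_contravar; lra. Qed.
Lemma ic_decr n : ic (S n) <= ic n.
Proof. unfold ic. pose proof (Kr_ge1 n). apply Rinv_le_contravar. lra. apply Kr_mono; lia. Qed.
Lemma cc_bounds n : 0 < cc n < 1.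
Proof. unfold cc. pose proof (ic_bounds n). split. apply exp_pos. rewrite <- exp_0. apply exp_increasing. lra. Qed.
Lemma cc_incr n : cc n <= cc (S n).
Proof. unfold cc. pose proof (ic_decr n). destruct (Req_dec (ic n) (ic (S n))) as [E|E]. rewrite E; lra.
  left. apply exp_increasing. lra. Qed.

Lemma pow_bounds d k : 0 <= d <= 1 -> 0 <= d ^ k <= 1.
Proof. intro H. split. apply pow_le; lra. rewrite <- (pow1 k). apply pow_incr; lra. Qed.

Lemma BV_pow d k : (forall n, 0 <= d n <= 1) -> ((forall n, d n <= d (S n)) \/ (forall n, d (S n) <= d n)) ->
  BV (fun n => d n ^ k) 2.
Proof. intros H1 H2. apply BV_mono01. intro; apply pow_bounds; auto.
  destruct H2; [left|right]; intro n; apply pow_incr; pose proof (H1 n); pose proof (H1 (S n)); specialize (H n); lra. Qed.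

Lemma opow_Mop d k x : (forall n, 0 <= d n <= 1) -> ((forall n, d n <= d (S n)) \/ (forall n, d (S n) <= d n)) ->
  opow (MM d) k x = MM (fun n => d n ^ k) x.
Proof. intros H1 H2. induction k.
  - simpl. symmetry. apply (Mop_uniq hD beta hb0 hbeta _ 2). apply (BV_pow d 0); auto.
    eapply series_cv_ext; [|apply (ex_cv hD x)]. intro; simpl; rewrite sc_1; auto.
  - change (opow (MM d) (S k) x) with (MM d (opow (MM d) k x)). rewrite IHk.
    rewrite (Mop_comp hD beta hb0 hbeta d _ 2 2). auto. apply BV_mono01; auto. apply BV_pow; auto. Qed.

Lemma cc_01 n : 0 <= cc n <= 1. Proof. pose proof (cc_bounds n); lra. Qed.
Lemma ic_01 n : 0 <= ic n <= 1. Proof. pose proof (ic_bounds n); lra. Qed.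

Lemma cc_pow n m : cc n ^ m = exp (- INR m / Kr n).
Proof. unfold cc. rewrite exp_pow_nat. f_equal. unfold ic. pose proof (Kr_ge1 n). field. lra. Qed.

Lemma Tpow_fin m y b : (forall n, (b < n)%nat -> exD y n = vzero) ->
  opow (MM cc) m y = psum (fun n => sc (exp (- INR m / Kr n)) (exD y n)) b.
Proof. intro H. rewrite opow_Mop by (auto using cc_01; left; apply cc_incr).
  rewrite (Mop_finite hD beta hb0 hbeta _ 2 y b); auto. apply psum_ext. intros; rewrite cc_pow; auto.
  apply BV_pow; auto using cc_01. left; apply cc_incr. Qed.

Definition dn (n : nat) (k : nat) := INR n * cc k ^ n + - INR n * (cc k ^ n * cc k).

Lemma dn_le_xe n k : 0 <= dn n k <= (INR n / Kr k) * exp (- (INR n / Kr k)).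
Proof. unfold dn. pose proof (cc_bounds k). pose proof (pos_INR n). pose proof (Kr_ge1 k).
  replace (INR n * cc k ^ n + - INR n * (cc k ^ n * cc k)) with (INR n * cc k ^ n * (1 - cc k)) by ring.
  rewrite cc_pow. pose proof (exp_pos (- INR n / Kr k)).
  replace (- (INR n / Kr k)) with (- INR n / Kr k) by (field; lra).
  pose proof (one_minus_exp (ic k) (proj1 (ic_01 k))). fold (cc k) in H3.
  split. apply Rmult_le_pos; [apply Rmult_le_pos|]; lra.
  unfold ic in H3. replace (INR n / Kr k * exp (- INR n / Kr k)) with (INR n * exp (- INR n / Kr k) * / Kr k) by (field; lra).
  apply Rmult_le_compat_l. apply Rmult_le_pos; lra. lra. Qed.

Lemma sum_dn n M : sum_f_R0 (dn n) M <= 2.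
Proof. eapply Rle_trans. apply sum_Rle. intros k _. apply (proj2 (dn_le_xe n k)).
  eapply Rle_trans. apply (sum_xe (fun k => INR n / Kr k)).
  - intro k. pose proof (pos_INR n). pose proof (Kr_ge1 k). apply Rmult_le_pos; [lra|]. left; apply Rinv_0_lt_compat; lra.
  - intro k. pose proof (pos_INR n). pose proof (Kr_ge1 k). pose proof (Kr_double k).
    unfold Rdiv. rewrite Rmult_assoc. apply Rmult_le_compat_l; auto.
    replace (/ Kr k * / 2) with (/ (2 * Kr k)) by (field; lra). apply Rinv_le_contravar; lra.
  - pose proof (exp_pos (- (INR n / Kr 0))). lra. Qed.

Lemma BV_dn n : BV (dn n) 6.
Proof. intro M. assert (Hp : forall k, 0 <= dn n k) by (intro; apply dn_le_xe).
  rewrite Rabs_right by (apply Rle_ge, Hp).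
  pose proof (var_pos_bound (dn n) M Hp). pose proof (sum_term_le (dn n) M M Hp (le_n _)).
  pose proof (sum_dn n M). lra. Qed.

Lemma T_ritt : ritt (MM cc).
Proof. split.
  - exists (2 * beta). intros n x. rewrite opow_Mop by (auto using cc_01; left; apply cc_incr).
    apply (Mop_bound hD beta hb0 hbeta _ 2). apply BV_pow; auto using cc_01. left; apply cc_incr.
  - exists (6 * beta). intros n x Hn.
    assert (BV1 : BV (fun k => cc k ^ n) 2) by (apply BV_pow; auto using cc_01; left; apply cc_incr).
    assert (BV2 : BV (fun k => cc k ^ n * cc k) (3 * 2 * 2)) by (apply BV_prod; auto; apply BV_mono01; auto using cc_01; left; apply cc_incr).
    assert (BVc : BV cc 2) by (apply BV_mono01; auto using cc_01; left; apply cc_incr).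
    rewrite opow_Mop by (auto using cc_01; left; apply cc_incr).
    fold (vsub x (MM cc x)). rewrite (Mop_sub hD beta hb0 hbeta _ 2) by auto. rewrite (Mop_comp hD beta hb0 hbeta _ _ 2 2) by auto.
    fold (sc (INR n) (vsub (MM (fun k => cc k ^ n) x) (MM (fun k => cc k ^ n * cc k) x))).
    replace (sc (INR n) (vsub (MM (fun k => cc k ^ n) x) (MM (fun k => cc k ^ n * cc k) x))) with (MM (dn n) x).
    + exact (Mop_bound hD beta hb0 hbeta (dn n) 6 x (BV_dn n)).
    + unfold dn. rewrite (Mop_lin hD beta hb0 hbeta _ _ _ _ 2 (3*2*2)) by auto.
      rewrite sc_sub. unfold vsub. rewrite vopp_sc'. auto.
Qed.

Lemma psum_swap (al : nat -> R) (bt : nat -> nat -> R) (v : nat -> X) b M :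
  psum (fun k => sc (al k) (psum (fun n => sc (bt k n) (v n)) b)) M = psum (fun n => sc (sum_f_R0 (fun k => al k * bt k n) M) (v n)) b.
Proof. induction M.
  - simpl. rewrite <- psum_sc. apply psum_ext. intros; rewrite sc_mul; auto.
  - change (psum (fun k => sc (al k) (psum (fun n => sc (bt k n) (v n)) b)) (S M)) with
      (vadd (psum (fun k => sc (al k) (psum (fun n => sc (bt k n) (v n)) b)) M) (sc (al (S M)) (psum (fun n => sc (bt (S M) n) (v n)) b))).
    rewrite IHM, <- psum_sc, <- psum_add. apply psum_ext. intros k _. rewrite sc_mul, <- sc_add. auto. Qed.

Lemma seq_cv_psum_sc (s : nat -> nat -> R) (sl : nat -> R) (v : nat -> X) b :
  (forall n, Un_cv (fun M => s M n) (sl n)) ->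
  seq_cv (fun M => psum (fun n => sc (s M n) (v n)) b) (psum (fun n => sc (sl n) (v n)) b).
Proof. intro H. induction b.
  - simpl. apply seq_cv_scal_seq. apply H.
  - simpl. apply seq_cv_add; auto. apply seq_cv_scal_seq. apply H. Qed.

Lemma Un_cv_ext (u v : nat -> R) l : (forall n, u n = v n) -> Un_cv u l -> Un_cv v l.
Proof. intros E H eps He. destruct (H eps He) as [N HN]. exists N. intros n Hn. rewrite <- E. auto. Qed.

Lemma B_bound x : vnorm (MM ic x) <= 2 * beta * vnorm x.
Proof. apply (Mop_bound hD beta hb0 hbeta _ 2). apply BV_mono01; auto using ic_01. right; apply ic_decr. Qed.

Lemma Bpow_bound k x : vnorm (opow (MM ic) k x) <= (2 * beta) ^ k * vnorm x.
Proof. induction k. simpl. lra. change (opow (MM ic) (S k) x) with (MM ic (opow (MM ic) k x)).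
  eapply Rle_trans; [apply B_bound|]. simpl. assert (0 <= 2 * beta) by lra. rewrite (Rmult_assoc (2 * beta) ((2 * beta) ^ k)). apply Rmult_le_compat_l; auto. Qed.

Lemma expser_ex t x : exists l, series_cv (fun k => vscal (RtoC ((- t) ^ k / INR (fact k))) (opow (MM ic) k x)) l.
Proof.
  apply cauchy_cv.
  set (w := fun k => / INR (fact k) * (Rabs t * (2 * beta)) ^ k).
  assert (Hc : Cauchy_crit (sum_f_R0 w)).
  { apply CV_Cauchy. exists (exp (Rabs t * (2 * beta))). apply exp_series. }
  assert (Hw : forall k, vnorm (vscal (RtoC ((- t) ^ k / INR (fact k))) (opow (MM ic) k x)) <= w k * vnorm x).
  { intro k. fold (sc ((- t) ^ k / INR (fact k)) (opow (MM ic) k x)). rewrite vnorm_sc.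
    unfold w. rewrite Rpow_mult_distr. unfold Rdiv. rewrite Rabs_mult, Rabs_inv, <- RPow_abs, Rabs_Ropp.
    rewrite (Rabs_right (INR (fact k))) by (apply Rle_ge, pos_INR).
    pose proof (Bpow_bound k x). pose proof (INR_fact_lt_0 k).
    assert (0 <= Rabs t ^ k * / INR (fact k)). { apply Rmult_le_pos. apply pow_le, Rabs_pos. left; apply Rinv_0_lt_compat; auto. }
    replace (/ INR (fact k) * (Rabs t ^ k * (2 * beta) ^ k) * vnorm x) with (Rabs t ^ k * / INR (fact k) * ((2 * beta) ^ k * vnorm x)) by ring.
    apply Rmult_le_compat_l; auto. }
  intros eps He. destruct (Hc (eps / (vnorm x + 1))) as [N HN].
  { pose proof (vnorm_nonneg _ x). apply Rdiv_lt_0_compat; lra. }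
  exists N. intros m n Hm Hn.
  assert (Hgen : forall m n, (N <= m)%nat -> (m <= n)%nat ->
     vnorm (vsub (psum (fun k => vscal (RtoC ((- t) ^ k / INR (fact k))) (opow (MM ic) k x)) n)
                 (psum (fun k => vscal (RtoC ((- t) ^ k / INR (fact k))) (opow (MM ic) k x)) m)) < eps).
  { clear m n Hm Hn. intros m n Hm Hmn.
    eapply Rle_lt_trans; [apply (psum_dist_le _ (fun k => w k * vnorm x)); auto|].
    rewrite <- !(scal_sum w). specialize (HN n m ltac:(lia) Hm). unfold R_dist in HN.
    pose proof (vnorm_nonneg _ x).
    replace (vnorm x * sum_f_R0 w n - vnorm x * sum_f_R0 w m) with (vnorm x * (sum_f_R0 w n - sum_f_R0 w m)) by ring.
    apply Rle_lt_trans with ((vnorm x + 1) * Rabs (sum_f_R0 w n - sum_f_R0 w m)).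
    { pose proof (RRle_abs (sum_f_R0 w n - sum_f_R0 w m)). pose proof (Rabs_pos (sum_f_R0 w n - sum_f_R0 w m)). nra. }
    apply Rmult_lt_compat_l with (r := vnorm x + 1) in HN; [|lra].
    replace ((vnorm x + 1) * (eps / (vnorm x + 1))) with eps in HN by (field; lra). lra. }
  destruct (Nat.le_ge_cases m n).
  - rewrite vnorm_sub_sym. apply Hgen; auto.
  - apply Hgen; auto.
Qed.

Lemma Sexists (m : nat) : exists S : X -> X, is_exp_neg (INR m) (MM ic) S.
Proof. destruct (choice_fun _ (expser_ex (INR m))) as [f Hf]. exists f. intro x. apply Hf. Qed.

Lemma S_fin m S y b : is_exp_neg (INR m) (MM ic) S -> (forall n, (b < n)%nat -> exD y n = vzero) ->
  S y = psum (fun n => sc (exp (- INR m / Kr n)) (exD y n)) b.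
Proof. intros HS Hy. apply (seq_cv_unique (psum (fun k => vscal (RtoC ((- INR m) ^ k / INR (fact k))) (opow (MM ic) k y)))); [apply HS|].
  eapply seq_cv_ext.
  { intro M. symmetry. 
    transitivity (psum (fun k => sc ((- INR m) ^ k / INR (fact k)) (psum (fun n => sc (ic n ^ k) (exD y n)) b)) M).
    - apply psum_ext. intros k _. unfold sc at 1. f_equal.
      rewrite opow_Mop by (auto using ic_01; right; apply ic_decr).
      apply (Mop_finite hD beta hb0 hbeta _ 2); auto. apply BV_pow; auto using ic_01. right; apply ic_decr.
    - apply psum_swap. }
  apply seq_cv_psum_sc. intro n.
  eapply Un_cv_ext; [|apply (exp_series (- INR m * ic n))].
  intro M. apply sum_eq. intros k _. rewrite Rpow_mult_distr. unfold Rdiv. ring.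
Qed.

Lemma main_conc :
  (exists a : nat -> R,
     (forall n, 0 < a n) /\ (forall n, a n <= a (S n)) /\
     exists Ainv : X -> X,
       bounded_op Ainv /\ multiplier D (fun n => / a n) Ainv /\
       ~ R_bounded (fun S => exists t, 0 <= t /\ is_exp_neg t Ainv S)) /\
  (exists c : nat -> R,
     (forall n, 0 < c n < 1) /\ (forall n, c n <= c (S n)) /\
     exists T : X -> X,
       bounded_op T /\ multiplier D c T /\ ritt T /\
       ~ R_bounded (fun S => exists n : nat, forall x, S x = opow T n x)).
Proof.
  assert (BVic : BV ic 2) by (apply BV_mono01; auto using ic_01; right; apply ic_decr).
  assert (BVcc : BV cc 2) by (apply BV_mono01; auto using cc_01; left; apply cc_incr).
  split.
  - exists Kr. split; [intro n; pose proof (Kr_ge1 n); lra|]. split; [intro n; apply Kr_mono; lia|].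
    exists (MM ic). split; [apply (Mop_bounded_op hD beta hb0 hbeta ic 2 BVic)|]. split.
    + exact (Mop_multiplier hD beta hb0 hbeta ic 2 BVic).
    + destruct (choice_fun _ Sexists) as [Sf HSf].
      apply (core _ Sf).
      * intro m. exists (INR m). split; [apply pos_INR|apply HSf].
      * intros m y b Hy. apply S_fin; auto.
  - exists cc. split; [apply cc_bounds|]. split; [apply cc_incr|].
    exists (MM cc). split; [apply (Mop_bounded_op hD beta hb0 hbeta cc 2 BVcc)|]. split.
    + exact (Mop_multiplier hD beta hb0 hbeta cc 2 BVcc).
    + split; [apply T_ritt|].
      apply (core _ (fun m => opow (MM cc) m)).
      * intro m. exists m. intro; reflexivity.
      * intros m y b Hy. apply Tpow_fin; auto.
Qed.

End Main.


Theorem theorem3 (X : CBanach) (D : nat -> X -> Prop)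
  (hD : schauder_decomposition D) (hnR : ~ R_schauder D) :
  (exists a : nat -> R,
     (forall n, 0 < a n) /\ (forall n, a n <= a (S n)) /\
     exists Ainv : X -> X,
       bounded_op Ainv /\ multiplier D (fun n => / a n) Ainv /\
       ~ R_bounded (fun S => exists t, 0 <= t /\ is_exp_neg t Ainv S)) /\
  (exists c : nat -> R,
     (forall n, 0 < c n < 1) /\ (forall n, c n <= c (S n)) /\
     exists T : X -> X,
       bounded_op T /\ multiplier D c T /\ ritt T /\
       ~ R_bounded (fun S => exists n : nat, forall x, S x = opow T n x)).
Proof.
  destruct (beta_exists hD) as [beta [hb0 hbeta]].
  exact (main_conc X D hD beta hb0 hbeta hnR).
Qed.
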